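(* Let $n\ge2$, $R>0$, $g(R)\in\mathbb{R}$. Suppose $f\in C^0((0,R))$ and $f\ge0$ in $(0,R)$, $f\not\equiv0$. Let $u^\varepsilon$ be the unique monotone increasing classical solution of problem $(P_\varepsilon)$, and define $w^\varepsilon=r^{n-1}u^\varepsilon_r$ and $v^\varepsilon=\Delta u^\varepsilon=u^\varepsilon_{rr}+\frac{n-1}{r}u^\varepsilon_r$. Then, at least for sufficiently small $\varepsilon>0$, there hold: (i) $\|u^\varepsilon\|_{C^0([0,R])}+\int_0^R|u^\varepsilon_r|^n\,dr\le C_0$; (ii) $\|u^\varepsilon\|_{C^1([0,R])}+\|w^\varepsilon\|_{C^0([0,R])}\le C_1$; (iii) $\|w^\varepsilon_r\|_{C^0([0,R])}\le C_2/\varepsilon$; (iv) $\|v^\varepsilon\|_{C^0([r_0,R])}\le \frac{C_3}{\varepsilon r_0^{n-1}}$ for all $0<r_0\le R$; (v) $\|v^\varepsilon_r\|_{C^0([r_0,R])}\le\frac{C_4}{\varepsilon r_0^{(n-1)^2}}$ for all $0<r_0\le R$; (vi) $\int_0^R|w^\varepsilon_r|^2dr+\int_0^Rr^{2(n-1)}|v^\varepsilon|^2dr\le C_5/\varepsilon$; (vii) $\varepsilon\int_0^Rr^{n-2-\alpha}|v^\varepsilon|^2dr+\int_0^Rr^{-\alpha}(u^\varepsilon_r)^nv^\varepsilon\,dr\le C_6/\varepsilon$ for all $\alpha<n-1$; (viii) $\varepsilon\int_0^Rr^{n-1}|v^\varepsilon_r|^2dr+\int_0^R(u^\varepsilon_r)^{n-1}|v^\varepsilon|^2dr\le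 C_7/\varepsilon$ for $n\ge3$; (ix) $\varepsilon\int_0^Rr^{2-\alpha}|v^\varepsilon_r|^2dr+\int_0^Rr^{1-\alpha}u^\varepsilon_r|v^\varepsilon|^2dr\le C_8/\varepsilon$ for $n=2$, $\alpha<1$; where $C_j=C_j(R,f,n)>0$, $j=0,\dots,8$, are $\varepsilon$-independent constants.
   Context: Subscripts $r$ denote $r$-derivatives. Problem $(P_\varepsilon)$, $\varepsilon>0$: $-\frac{\varepsilon}{r^{n-1}}\Big(r^{n-1}\Big(\frac{1}{r^{n-1}}(r^{n-1}u^\varepsilon_r)_r\Big)_r\Big)_r+\frac{1}{n r^{n-1}}((u^\varepsilon_r)^n)_r=f$ in $(0,R)$, $u^\varepsilon(R)=g(R)$, $u^\varepsilon_r(0)=0$, $|u^\varepsilon_{rr}(0)|<\infty$, $|u^\varepsilon_{rrr}(r)|=o(r^{-(n-1)})$ as $r\to0^+$, $u^\varepsilon_{rr}(R)+\frac{n-1}{R}u^\varepsilon_r(R)=\varepsilon$ (a classical solution satisfies these pointwise). *)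

(* Defs.v *)
From Stdlib Require Import Reals.
From Coquelicot Require Import Coquelicot.
Open Scope R_scope.

(* u is C^k near every point of P: on a neighbourhood of each x with P x,
   all derivatives of order <= k exist and the k-th one is continuous.
   (A function given on a closed interval that is C^k up to an endpoint
   extends to such a u, so this encodes C^k up to the boundary.) *)
Definition Ck_near (k : nat) (u : R -> R) (P : R -> Prop) : Prop :=
  forall x, P x -> exists d : R, 0 < d /\
    forall y, Rabs (y - x) < d ->
      (forall j, (j <= k)%nat -> ex_derive_n u j y) /\
      continuous (Derive_n u k) y.

Definition w_of (n : nat) (u : R -> R) (r : R) : R := r ^ (n - 1) * Derive u r.

Definition v_of (n : nat) (u : R -> R) (r : R) : R :=
  Derive (Derive u) r + (INR n - 1) / r * Derive u r.

Definition Peps_lhs (n : nat) (eps : R) (u : R -> R) (r : R) : R :=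
  - eps / r ^ (n - 1) *
    Derive (fun s => s ^ (n - 1) *
      Derive (fun t => / t ^ (n - 1) * Derive (fun x => x ^ (n - 1) * Derive u x) t) s) r
  + / (INR n * r ^ (n - 1)) * Derive (fun s => (Derive u s) ^ n) r.

(* classical solution of (P_eps) on [0,R], with boundary value g(R) = gR:
   u in C^2([0,R]) /\ C^3((0,R]) /\ C^4((0,R)), the equation pointwise in (0,R),
   u(R) = g(R), u_r(0) = 0, |u_rr(0)| < oo (automatic: u_rr(0) is a real number),
   r^{n-1} u_rrr(r) -> 0 as r -> 0+, and u_rr(R) + (n-1)/R u_r(R) = eps. *)
Definition classical_solution (n : nat) (Rr gR eps : R) (f : R -> R) (u : R -> R) : Prop :=
  Ck_near 2 u (fun r => 0 <= r <= Rr) /\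
  Ck_near 3 u (fun r => 0 < r <= Rr) /\
  Ck_near 4 u (fun r => 0 < r < Rr) /\
  (forall r, 0 < r < Rr -> Peps_lhs n eps u r = f r) /\
  u Rr = gR /\
  Derive u 0 = 0 /\
  filterlim (fun r => r ^ (n - 1) * Derive_n u 3 r) (at_right 0) (locally 0) /\
  Derive_n u 2 Rr + (INR n - 1) / Rr * Derive u Rr = eps.

Definition mono_incr_on (Rr : R) (u : R -> R) : Prop :=
  forall r s, 0 <= r -> r <= s -> s <= Rr -> u r <= u s.

Definition integral_eq (h : R -> R) (a b I : R) : Prop :=
  is_RInt_gen h (at_right a) (at_left b) I.

(* Main.v *)
Require Import Defs.
From Stdlib Require Import Reals Lra Lia Classical.
From Coquelicot Require Import Coquelicot.
Open Scope R_scope.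

Lemma mvt_open (f df : R -> R) (a b : R) : a < b ->
  (forall c, a < c < b -> is_derive f c (df c)) ->
  (forall c, a <= c <= b -> continuity_pt f c) ->
  exists c, a < c < b /\ f b - f a = df c * (b - a).
Proof.
  intros Hab Hd Hc.
  assert (pr1 : forall c, a < c < b -> derivable_pt f c).
  { intros c Hc'. exists (df c). apply is_derive_Reals. now apply Hd. }
  assert (pr2 : forall c, a < c < b -> derivable_pt id c).
  { intros c _. apply derivable_pt_id. }
  destruct (MVT f id a b pr1 pr2 Hab Hc) as [c [P HP]].
  { intros c _. apply derivable_continuous_pt, derivable_pt_id. }
  exists c; split; auto.
  rewrite (derive_pt_eq_0 f c (df c) (pr1 c P)) in HP.
  2: { apply is_derive_Reals; now apply Hd. }
  rewrite (derive_pt_eq_0 id c 1 (pr2 c P)) in HP.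
  2: { apply derivable_pt_lim_id. }
  unfold id in HP. lra.
Qed.

Lemma incr_open (f df : R -> R) (a b : R) : a <= b ->
  (forall c, a < c < b -> is_derive f c (df c)) ->
  (forall c, a < c < b -> 0 <= df c) ->
  (forall c, a <= c <= b -> continuity_pt f c) -> f a <= f b.
Proof.
  intros Hab Hd Hp Hc. destruct (Req_dec a b) as [->|Hne]; [lra|].
  destruct (mvt_open f df a b) as [c [Hc1 Hc2]]; auto; try lra.
  assert (0 <= df c * (b - a)) by (apply Rmult_le_pos; [apply Hp; auto|lra]). lra.
Qed.

Lemma decr_open (f df : R -> R) (a b : R) : a <= b ->
  (forall c, a < c < b -> is_derive f c (df c)) ->
  (forall c, a < c < b -> df c <= 0) ->
  (forall c, a <= c <= b -> continuity_pt f c) -> f b <= f a.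
Proof.
  intros Hab Hd Hp Hc.
  assert (- f a <= - f b); [|lra].
  apply (incr_open (fun x => - f x) (fun x => - df x) a b); auto.
  - intros c Hc'. exact (is_derive_opp f c (df c) (Hd c Hc')).
  - intros c Hc'. specialize (Hp c Hc'). lra.
  - intros c Hc'. apply continuity_pt_opp. now apply Hc.
Qed.

Lemma cont_eps (f : R -> R) x : continuity_pt f x ->
  forall e, 0 < e -> exists d, 0 < d /\ forall y, Rabs (y - x) < d -> Rabs (f y - f x) < e.
Proof.
  intros H e He. destruct (H e He) as [d [Hd H']].
  exists d; split; auto. intros y Hy.
  destruct (Req_dec y x) as [->|Hne].
  - rewrite Rminus_diag, Rabs_R0; auto.
  - apply H'. split; [split; [exact I| auto]|]. simpl. unfold R_dist. auto.
Qed.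

Lemma cont_of_cont (f : R -> R) x : continuous f x -> continuity_pt f x.
Proof. intros H. apply continuity_pt_filterlim. exact H. Qed.

Lemma cont_of_ex_derive (f : R -> R) x : ex_derive f x -> continuity_pt f x.
Proof. intros H. apply cont_of_cont. exact (ex_derive_continuous f x H). Qed.

Lemma deriv_nonneg_right (f : R -> R) x l d : is_derive f x l -> 0 < d ->
  (forall h, 0 < h < d -> f x <= f (x + h)) -> 0 <= l.
Proof.
  intros Hd Hdp Hm. apply is_derive_Reals in Hd.
  destruct (Rle_or_lt 0 l) as [|Hl]; auto.
  destruct (Hd (- l / 2)) as [dl Hdl]; [lra|].
  set (h := Rmin (d/2) (dl/2)).
  assert (Hh : 0 < h) by (unfold h; destruct dl; simpl; apply Rmin_glb_lt; lra).
  assert (Hh1 : h < d) by (unfold h; assert (Rmin (d/2) (dl/2) <= d/2) by apply Rmin_l; lra).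
  assert (Hh2 : Rabs h < dl) by (rewrite Rabs_pos_eq by lra; unfold h; assert (Rmin (d/2) (dl/2) <= dl/2) by apply Rmin_r; destruct dl; simpl in *; lra).
  specialize (Hdl h (Rgt_not_eq _ _ Hh) Hh2). specialize (Hm h (conj Hh Hh1)).
  assert (0 <= (f (x + h) - f x) / h) by (apply Rdiv_le_0_compat; lra).
  apply Rabs_lt_between in Hdl. lra.
Qed.

Lemma deriv_nonneg_left (f : R -> R) x l d : is_derive f x l -> 0 < d ->
  (forall h, 0 < h < d -> f (x - h) <= f x) -> 0 <= l.
Proof.
  intros Hd Hdp Hm. apply is_derive_Reals in Hd.
  destruct (Rle_or_lt 0 l) as [|Hl]; auto.
  destruct (Hd (- l / 2)) as [dl Hdl]; [lra|].
  set (h := Rmin (d/2) (dl/2)).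
  assert (Hh : 0 < h) by (unfold h; destruct dl; simpl; apply Rmin_glb_lt; lra).
  assert (Hh1 : h < d) by (unfold h; assert (Rmin (d/2) (dl/2) <= d/2) by apply Rmin_l; lra).
  assert (Hh2 : Rabs (-h) < dl) by (rewrite Rabs_Ropp, Rabs_pos_eq by lra; unfold h; assert (Rmin (d/2) (dl/2) <= dl/2) by apply Rmin_r; destruct dl; simpl in *; lra).
  assert (Hnz : -h <> 0) by lra.
  specialize (Hdl (-h) Hnz Hh2). specialize (Hm h (conj Hh Hh1)).
  replace (x + - h) with (x - h) in Hdl by ring.
  assert (0 <= (f (x - h) - f x) / - h).
  { replace ((f (x - h) - f x) / - h) with ((f x - f (x - h)) / h) by (field; lra).
    apply Rdiv_le_0_compat; lra. }
  apply Rabs_lt_between in Hdl. lra.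
Qed.

Lemma deriv_pos_right (f : R -> R) x l : is_derive f x l -> 0 < l -> f x = 0 ->
  exists d, 0 < d /\ forall h, 0 < h < d -> 0 < f (x + h).
Proof.
  intros Hd Hl H0. apply is_derive_Reals in Hd.
  destruct (Hd (l / 2)) as [dl Hdl]; [lra|].
  exists dl; split; [apply cond_pos|]. intros h Hh.
  assert (Hh2 : Rabs h < dl) by (rewrite Rabs_pos_eq; lra).
  specialize (Hdl h (Rgt_not_eq _ _ (proj1 Hh)) Hh2). rewrite H0 in Hdl.
  apply Rabs_lt_between in Hdl.
  assert (0 < (f (x + h) - 0) / h) by lra.
  replace (f (x+h)) with (((f (x + h) - 0) / h) * h) by (field; lra).
  apply Rmult_lt_0_compat; lra.
Qed.

Lemma pow_lt_nonneg a b n : 0 <= a < b -> (1 <= n)%nat -> a ^ n < b ^ n.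
Proof.
  intros [Ha Hab] Hn. induction n as [|n IH]; [lia|].
  destruct n as [|n]; [simpl; lra|].
  assert (a ^ S n < b ^ S n) by (apply IH; lia).
  simpl in *. assert (0 <= a ^ n) by (apply pow_le; auto).
  assert (0 <= a * a ^ n) by (apply Rmult_le_pos; auto).
  apply Rle_lt_trans with (b * (a * a^n)).
  - apply Rmult_le_compat_r; lra.
  - apply Rmult_lt_compat_l; lra.
Qed.

Lemma pow_le_nonneg a b n : 0 <= a <= b -> a ^ n <= b ^ n.
Proof. intros [Ha Hab]. apply pow_incr; auto. Qed.
Lemma ballR (x e y : R) : @ball R_UniformSpace x e y <-> Rabs (y - x) < e.
Proof. unfold ball; simpl; unfold AbsRing_ball, abs, minus, plus, opp; simpl. tauto. Qed.

Ltac bR H := apply (proj1 (ballR _ _ _)) in H; simpl in H.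

Lemma exRI (h : R -> R) Rr a b : (forall x, 0 < x <= Rr -> continuity_pt h x) ->
  0 < a <= Rr -> 0 < b <= Rr -> ex_RInt h a b.
Proof.
  intros Hc Ha Hb. apply (@ex_RInt_continuous R_CompleteNormedModule). intros z Hz.
  apply continuity_pt_filterlim. apply Hc.
  split.
  - apply Rlt_le_trans with (Rmin a b); [|lra]. apply Rmin_glb_lt; lra.
  - apply Rle_trans with (Rmax a b); [lra|]. apply Rmax_lub; lra.
Qed.

Lemma RInt_mono_low (h : R -> R) Rr a a' : (forall x, 0 < x <= Rr -> continuity_pt h x) ->
  (forall x, 0 < x <= Rr -> 0 <= h x) -> 0 < a <= a' -> a' <= Rr ->
  RInt h a' Rr <= RInt h a Rr.
Proof.
  intros Hc Hp Ha Ha'.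
  rewrite <- (RInt_Chasles h a a' Rr) by (apply (exRI h Rr); auto; lra).
  assert (0 <= RInt h a a'). { apply RInt_ge_0; [lra| apply (exRI h Rr); auto; lra|].
    intros x Hx; apply Hp; lra. }
  change (plus (RInt h a a') (RInt h a' Rr)) with (RInt h a a' + RInt h a' Rr). lra.
Qed.

Lemma improper (h : R -> R) (Rr B : R) : 0 < Rr ->
  (forall x, 0 < x <= Rr -> continuity_pt h x) ->
  (forall x, 0 < x <= Rr -> 0 <= h x) ->
  (forall a, 0 < a < Rr -> RInt h a Rr <= B) ->
  exists I, is_RInt_gen h (at_right 0) (at_left Rr) I /\
   (forall a, 0 < a < Rr -> RInt h a Rr <= I) /\
   (forall e, 0 < e -> exists a0, 0 < a0 < Rr /\ forall a, 0 < a <= a0 -> I - e <= RInt h a Rr).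
Proof.
  intros HR Hc Hp HB.
  set (E := fun y => exists a, 0 < a < Rr /\ y = RInt h a Rr).
  destruct (completeness E) as [I [HI1 HI2]].
  { exists B. intros y [a [Ha ->]]. auto. }
  { exists (RInt h (Rr/2) Rr). exists (Rr/2). split; auto; lra. }
  assert (Hup : forall a, 0 < a < Rr -> RInt h a Rr <= I).
  { intros a Ha. apply HI1. exists a; auto. }
  assert (Happ : forall e, 0 < e -> exists a0, 0 < a0 < Rr /\ forall a, 0 < a <= a0 -> I - e <= RInt h a Rr).
  { intros e He.
    destruct (classic (exists a0, 0 < a0 < Rr /\ I - e < RInt h a0 Rr)) as [[a0 [Ha0 Ha0']]|Hn].
    - exists a0; split; auto. intros a Ha.
      assert (RInt h a0 Rr <= RInt h a Rr) by (apply (RInt_mono_low h Rr); auto; lra). lra.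
    - exfalso. assert (I <= I - e); [|lra]. apply HI2.
      intros y [a [Ha ->]]. apply Rnot_lt_le. intros Hlt. apply Hn. exists a; auto. }
  exists I; split; [|split; auto].
  set (c := Rr / 2).
  set (f := fun x => RInt h c x).
  assert (Hder : forall x, 0 < x < Rr -> is_derive f x (h x)).
  { intros x Hx. apply (@is_derive_RInt R_NormedModule h f c x).
    - set (d := Rmin (x/2) ((Rr - x)/2)).
      assert (Hd : 0 < d) by (unfold d; apply Rmin_glb_lt; lra).
      exists (mkposreal d Hd). intros y Hy. bR Hy.
      assert (d <= x/2) by apply Rmin_l. assert (d <= (Rr-x)/2) by apply Rmin_r.
      apply Rabs_lt_between in Hy.
      apply (@RInt_correct R_CompleteNormedModule). apply (exRI h Rr); auto; unfold c; lra.
    - apply continuity_pt_filterlim. apply Hc; lra. }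
  replace I with (RInt h c Rr - (RInt h c Rr - I)) by ring.
  apply (is_RInt_gen_ext (Derive f)).
  { apply Filter_prod with (fun a => 0 < a < c) (fun b => c < b < Rr).
    - exists (mkposreal c ltac:(unfold c; lra)). intros y Hy Hy0. bR Hy.
      apply Rabs_lt_between in Hy. lra.
    - exists (mkposreal c ltac:(unfold c; lra)). intros y Hy Hy0. bR Hy.
      apply Rabs_lt_between in Hy. unfold c in *; lra.
    - intros a b Ha Hb x Hx. simpl in Hx.
      rewrite Rmin_left in Hx by lra. rewrite Rmax_right in Hx by lra.
      apply is_derive_unique. apply Hder. lra. }
  apply is_RInt_gen_Derive.

  - apply Filter_prod with (fun a => 0 < a < c) (fun b => c < b < Rr).
    + exists (mkposreal c ltac:(unfold c; lra)). intros y Hy Hy0. bR Hy.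
      apply Rabs_lt_between in Hy. lra.
    + exists (mkposreal c ltac:(unfold c; lra)). intros y Hy Hy0. bR Hy.
      apply Rabs_lt_between in Hy. unfold c in *; lra.
    + intros a b Ha Hb x Hx. simpl in Hx.
      rewrite Rmin_left in Hx by lra. rewrite Rmax_right in Hx by lra.
      exists (h x). apply Hder. lra.
  - apply Filter_prod with (fun a => 0 < a < c) (fun b => c < b < Rr).
    + exists (mkposreal c ltac:(unfold c; lra)). intros y Hy Hy0. bR Hy.
      apply Rabs_lt_between in Hy. lra.
    + exists (mkposreal c ltac:(unfold c; lra)). intros y Hy Hy0. bR Hy.
      apply Rabs_lt_between in Hy. unfold c in *; lra.
    + intros a b Ha Hb x Hx. simpl in Hx.
      rewrite Rmin_left in Hx by lra. rewrite Rmax_right in Hx by lra.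
      apply (continuous_ext_loc _ h).
      * set (d := Rmin (x/2) ((Rr - x)/2)).
        assert (Hd : 0 < d) by (unfold d; apply Rmin_glb_lt; lra).
        exists (mkposreal d Hd). intros y Hy. bR Hy.
        assert (d <= x/2) by apply Rmin_l. assert (d <= (Rr-x)/2) by apply Rmin_r.
        apply Rabs_lt_between in Hy.
        symmetry; apply is_derive_unique. apply Hder. lra.
      * apply continuity_pt_filterlim. apply Hc; lra.
  -
    apply filterlim_locally. intros e.
    destruct (Happ (e/2)) as [a0 [Ha0 Ha0']]. { destruct e; simpl; lra. }
    exists (mkposreal (Rmin a0 c) ltac:(apply Rmin_glb_lt; unfold c; lra)).
    intros y Hy Hy0. bR Hy.
    assert (Rmin a0 c <= a0) by apply Rmin_l. assert (Rmin a0 c <= c) by apply Rmin_r.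
    rewrite Rminus_0_r, Rabs_pos_eq in Hy by lra.
    apply (proj2 (ballR _ _ _)). unfold f.
    assert (Hch : RInt h y c + RInt h c Rr = RInt h y Rr).
    { apply (RInt_Chasles h y c Rr); apply (exRI h Rr); auto; unfold c in *; lra. }
    assert (Hsw : RInt h c y = - RInt h y c) by (symmetry; apply (@opp_RInt_swap R_CompleteNormedModule); apply (exRI h Rr); auto; unfold c in *; lra).
    rewrite Hsw.
    specialize (Ha0' y ltac:(lra)). assert (RInt h y Rr <= I) by (apply Hup; unfold c in *; lra).
    rewrite Rabs_pos_eq by lra. destruct e; simpl in *. lra.
  -
    destruct (continuity_ab_maj (fun x => Rabs (h x)) c Rr) as [xm [Hxm1 Hxm2]].
    { unfold c; lra. }
    { intros x Hx. apply continuity_pt_comp with (f1 := h) (f2 := Rabs).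
      apply Hc; unfold c in *; lra. apply Rcontinuity_abs. }
    set (Mh := Rabs (h xm) + 1).
    apply filterlim_locally. intros e.
    exists (mkposreal (Rmin (e / Mh) c) ltac:(apply Rmin_glb_lt; [apply Rdiv_lt_0_compat; [apply cond_pos| unfold Mh; pose proof (Rabs_pos (h xm)); lra]| unfold c; lra])).
    intros y Hy Hy0. bR Hy.
    assert (Rmin (e/Mh) c <= e / Mh) by apply Rmin_l. assert (Rmin (e/Mh) c <= c) by apply Rmin_r.
    rewrite Rabs_minus_sym, Rabs_pos_eq in Hy by lra.
    apply (proj2 (ballR _ _ _)). unfold f.
    assert (Hch : RInt h c y + RInt h y Rr = RInt h c Rr).
    { apply (RInt_Chasles h c y Rr); apply (exRI h Rr); auto; unfold c in *; lra. }
    replace (RInt h c y - RInt h c Rr) with (- RInt h y Rr) by (change (plus (RInt h c y) (RInt h y Rr)) with (RInt h c y + RInt h y Rr) in Hch; lra).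
    rewrite Rabs_Ropp.
    assert (Hb : Rabs (RInt h y Rr) <= (Rr - y) * Mh).
    { apply abs_RInt_le_const; [lra| apply (exRI h Rr); auto; unfold c in *; lra|].
      intros t Ht. assert (Rabs (h t) <= Rabs (h xm)) by (apply Hxm1; unfold c in *; lra).
      unfold Mh; lra. }
    assert (HMh : 0 < Mh) by (unfold Mh; pose proof (Rabs_pos (h xm)); lra).
    apply Rle_lt_trans with ((Rr - y) * Mh); auto.
    assert (Rr - y < e / Mh) by lra.
    apply Rmult_lt_compat_r with (r := Mh) in H1; auto.
    replace (e / Mh * Mh) with (pos e) in H1 by (field; lra). exact H1.
Qed.
Notation D1 u := (Derive u).
Notation D2 u := (Derive (Derive u)).
Notation D3 u := (Derive (Derive (Derive u))).

Definition V1 (n : nat) (u : R -> R) (x : R) : R :=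
  D3 u x + (INR n - 1) * (D2 u x / x - D1 u x / x ^ 2).
Definition W1 (n : nat) (u : R -> R) (x : R) : R :=
  INR (n - 1) * x ^ (n - 1 - 1) * D1 u x + x ^ (n - 1) * D2 u x.
Definition Qf (n : nat) (eps : R) (u : R -> R) (x : R) : R :=
  D1 u x ^ n / INR n - eps * (x ^ (n - 1) * V1 n u x).

Lemma Ck_at k u (P : R -> Prop) x : Ck_near k u P -> P x ->
  (forall j, (j <= k)%nat -> ex_derive_n u j x) /\ continuous (Derive_n u k) x.
Proof.
  intros H Hx. destruct (H x Hx) as [d [Hd H']]. apply H'.
  rewrite Rminus_diag, Rabs_R0; auto.
Qed.

Record SolF (n : nat) (Rr eps : R) (f u : R -> R) : Prop := {
  sf_d0 : forall x, 0 <= x <= Rr -> ex_derive u x;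
  sf_d1 : forall x, 0 <= x <= Rr -> ex_derive (D1 u) x;
  sf_c2 : forall x, 0 <= x <= Rr -> continuity_pt (D2 u) x;
  sf_d2 : forall x, 0 < x <= Rr -> ex_derive (D2 u) x;
  sf_c3 : forall x, 0 < x <= Rr -> continuity_pt (D3 u) x;
  sf_d3 : forall x, 0 < x < Rr -> ex_derive (D3 u) x;
  sf_ode : forall r, 0 < r < Rr -> Peps_lhs n eps u r = f r;
  sf_p0 : D1 u 0 = 0;
  sf_lim : filterlim (fun r => r ^ (n - 1) * D3 u r) (at_right 0) (locally 0);
  sf_bc : D2 u Rr + (INR n - 1) / Rr * D1 u Rr = eps }.

Lemma solF n Rr gR eps f u : classical_solution n Rr gR eps f u -> SolF n Rr eps f u.
Proof.
  intros [H2 [H3 [H4 [Hode [HuR [Hp0 [Hlim Hbc]]]]]]].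
  constructor; auto.
  - intros x Hx. destruct (Ck_at 2 u _ x H2 Hx) as [Hj _]. exact (Hj 1%nat ltac:(lia)).
  - intros x Hx. destruct (Ck_at 2 u _ x H2 Hx) as [Hj _]. exact (Hj 2%nat ltac:(lia)).
  - intros x Hx. destruct (Ck_at 2 u _ x H2 Hx) as [_ Hc]. apply cont_of_cont. exact Hc.
  - intros x Hx. destruct (Ck_at 3 u _ x H3 Hx) as [Hj _]. exact (Hj 3%nat ltac:(lia)).
  - intros x Hx. destruct (Ck_at 3 u _ x H3 Hx) as [_ Hc]. apply cont_of_cont. exact Hc.
  - intros x Hx. destruct (Ck_at 4 u _ x H4 Hx) as [Hj _]. exact (Hj 4%nat ltac:(lia)).
Qed.

Lemma loc_in a b r : a < r < b -> locally r (fun y => a < y < b).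
Proof.
  intros Hr. set (d := Rmin (r - a) (b - r)).
  assert (Hd : 0 < d) by (unfold d; apply Rmin_glb_lt; lra).
  exists (mkposreal d Hd). intros y Hy. bR Hy.
  assert (d <= r - a) by apply Rmin_l. assert (d <= b - r) by apply Rmin_r.
  apply Rabs_lt_between in Hy. lra.
Qed.


Lemma is_derive_D1 n Rr eps f u x : SolF n Rr eps f u -> 0 <= x <= Rr -> is_derive u x (D1 u x).
Proof. intros S Hx. apply Derive_correct. now apply (sf_d0 _ _ _ _ _ S). Qed.
Lemma is_derive_D2 n Rr eps f u x : SolF n Rr eps f u -> 0 <= x <= Rr -> is_derive (D1 u) x (D2 u x).
Proof. intros S Hx. apply Derive_correct. now apply (sf_d1 _ _ _ _ _ S). Qed.
Lemma is_derive_D3 n Rr eps f u x : SolF n Rr eps f u -> 0 < x <= Rr -> is_derive (D2 u) x (D3 u x).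
Proof. intros S Hx. apply Derive_correct. now apply (sf_d2 _ _ _ _ _ S). Qed.

Lemma is_derive_eq (f : R -> R) x l l' : is_derive f x l -> l = l' -> is_derive f x l'.
Proof. intros H ->; exact H. Qed.

Lemma W1_eq n u x : (2 <= n)%nat -> 0 < x -> W1 n u x = x ^ (n - 1) * v_of n u x.
Proof.
  intros Hn Hx. unfold W1, v_of.
  destruct n as [|[|k]]; try lia. simpl (S (S k) - 1)%nat. simpl (S k - 1)%nat.
  rewrite Nat.sub_0_r. rewrite (S_INR (S k)). simpl pow. field. lra.
Qed.

Lemma d_w n Rr eps f u x : SolF n Rr eps f u -> (2 <= n)%nat -> 0 <= x <= Rr ->
  is_derive (w_of n u) x (W1 n u x).
Proof.
  intros S Hn Hx. unfold w_of, W1.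
  pose proof (is_derive_D2 n Rr eps f u x S Hx) as H2.
  pose proof (is_derive_pow id (n-1) x 1 (is_derive_id x)) as Hp.
  pose proof (is_derive_mult (fun r => id r ^ (n-1)) (D1 u) x _ _ Hp H2 ltac:(intros; apply Rmult_comm)) as Hm.
  unfold id in Hm. refine (is_derive_eq _ _ _ _ Hm _).
  replace (Init.Nat.pred (n-1)) with (n - 1 - 1)%nat by lia.
  unfold plus, mult; simpl. ring.
Qed.

Lemma d_v n Rr eps f u x : SolF n Rr eps f u -> 0 < x <= Rr ->
  is_derive (v_of n u) x (V1 n u x).
Proof.
  intros S Hx. unfold v_of, V1.
  pose proof (sf_d2 _ _ _ _ _ S x Hx) as H2.
  pose proof (sf_d1 _ _ _ _ _ S x ltac:(lra)) as H1.
  auto_derive. { repeat split; auto; lra. }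
  change (D1 (fun x0 => D2 u x0) x) with (D3 u x). change (D1 (fun x0 => D1 u x0) x) with (D2 u x). simpl. field. lra.
Qed.

Lemma cpt_plus f g x : continuity_pt f x -> continuity_pt g x -> continuity_pt (fun y => f y + g y) x.
Proof. intros; exact (continuity_pt_plus f g x H H0). Qed.
Lemma cpt_minus f g x : continuity_pt f x -> continuity_pt g x -> continuity_pt (fun y => f y - g y) x.
Proof. intros; exact (continuity_pt_minus f g x H H0). Qed.
Lemma cpt_mult f g x : continuity_pt f x -> continuity_pt g x -> continuity_pt (fun y => f y * g y) x.
Proof. intros; exact (continuity_pt_mult f g x H H0). Qed.
Lemma cpt_div f g x : continuity_pt f x -> continuity_pt g x -> g x <> 0 -> continuity_pt (fun y => f y / g y) x.
Proof. intros; exact (continuity_pt_div f g x H H0 H1). Qed.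
Lemma cpt_opp f x : continuity_pt f x -> continuity_pt (fun y => - f y) x.
Proof. intros; exact (continuity_pt_opp f x H). Qed.
Lemma cpt_const (c : R) x : continuity_pt (fun _ => c) x.
Proof. apply continuity_pt_const. intros a b; reflexivity. Qed.
Lemma cpt_id x : continuity_pt (fun y => y) x.
Proof. apply derivable_continuous_pt, derivable_pt_id. Qed.
Lemma cpt_pow f k x : continuity_pt f x -> continuity_pt (fun y => f y ^ k) x.
Proof.
  intros H. apply (continuity_pt_comp f (fun y => y ^ k)); auto.
  apply derivable_continuous_pt. apply derivable_pt_pow.
Qed.
Lemma cpt_abs f x : continuity_pt f x -> continuity_pt (fun y => Rabs (f y)) x.
Proof. intros H. apply (continuity_pt_comp f Rabs); auto. apply Rcontinuity_abs. Qed.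
Lemma cpt_Rpower f a x : continuity_pt f x -> 0 < f x -> continuity_pt (fun y => Rpower (f y) a) x.
Proof.
  intros H Hp. apply (continuity_pt_comp f (fun y => Rpower y a)); auto.
  apply derivable_continuous_pt. exists (a * Rpower (f x) (a - 1)).
  apply derivable_pt_lim_power; auto.
Qed.

Lemma cpt_inv f x : continuity_pt f x -> f x <> 0 -> continuity_pt (fun y => / f y) x.
Proof. intros; exact (continuity_pt_inv f x H H0). Qed.
Lemma cpt_Rinv x : x <> 0 -> continuity_pt Rinv x.
Proof. intros. apply (cpt_inv (fun y => y)); auto. apply cpt_id. Qed.

Ltac cont_tac :=
  repeat (first
    [ (apply cpt_div; [| |]) | (apply cpt_inv; [|]) | (apply cpt_Rinv) | apply cpt_plus | apply cpt_minus | apply cpt_mult | apply cpt_opp | apply cpt_const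
    | apply cpt_id | apply cpt_pow | apply cpt_abs
    | (apply cpt_div; [| |]) ]); auto.

Lemma c_p n Rr eps f u x : SolF n Rr eps f u -> 0 <= x <= Rr -> continuity_pt (D1 u) x.
Proof. intros S Hx. apply cont_of_ex_derive. now apply (sf_d1 _ _ _ _ _ S). Qed.
Lemma c_u n Rr eps f u x : SolF n Rr eps f u -> 0 <= x <= Rr -> continuity_pt u x.
Proof. intros S Hx. apply cont_of_ex_derive. now apply (sf_d0 _ _ _ _ _ S). Qed.

Lemma c_V1 n Rr eps f u x : SolF n Rr eps f u -> 0 < x <= Rr -> continuity_pt (V1 n u) x.
Proof.
  intros S Hx. unfold V1.
  pose proof (c_p n Rr eps f u x S ltac:(lra)).
  pose proof (sf_c2 _ _ _ _ _ S x ltac:(lra)).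
  pose proof (sf_c3 _ _ _ _ _ S x Hx).
  cont_tac; try (apply pow_nonzero); lra.
Qed.

Lemma c_v n Rr eps f u x : SolF n Rr eps f u -> 0 < x <= Rr -> continuity_pt (v_of n u) x.
Proof.
  intros S Hx. unfold v_of.
  pose proof (c_p n Rr eps f u x S ltac:(lra)).
  pose proof (sf_c2 _ _ _ _ _ S x ltac:(lra)).
  cont_tac. lra.
Qed.

Lemma c_Q n Rr eps f u x : SolF n Rr eps f u -> (2 <= n)%nat -> 0 < x <= Rr -> continuity_pt (Qf n eps u) x.
Proof.
  intros S Hn Hx. unfold Qf.
  pose proof (c_p n Rr eps f u x S ltac:(lra)).
  pose proof (c_V1 n Rr eps f u x S Hx).
  pose proof (sf_c2 _ _ _ _ _ S x ltac:(lra)).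
  pose proof (sf_c3 _ _ _ _ _ S x Hx).
  cont_tac; try (apply pow_nonzero); try lra. apply not_0_INR. lia.
Qed.

Lemma d_Q n Rr eps f u r : SolF n Rr eps f u -> (2 <= n)%nat -> 0 < r < Rr ->
  is_derive (Qf n eps u) r (r ^ (n - 1) * f r).
Proof.
  intros S Hn Hr.
  pose proof (sf_ode _ _ _ _ _ S r Hr) as Hode. unfold Peps_lhs in Hode.
  assert (HB : forall y, 0 < y < Rr ->
     / y ^ (n - 1) * Derive (fun x => x ^ (n - 1) * Derive u x) y = v_of n u y).
  { intros y Hy.
    assert (E : Derive (fun x => x ^ (n - 1) * Derive u x) y = W1 n u y)
      by (apply is_derive_unique; exact (d_w n Rr eps f u y S Hn ltac:(lra))).
    rewrite E.
    rewrite W1_eq by (auto; lra). field. apply pow_nonzero; lra. }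
  assert (HC : forall y, 0 < y < Rr ->
     Derive (fun t => / t ^ (n - 1) * Derive (fun x => x ^ (n - 1) * Derive u x) t) y = V1 n u y).
  { intros y Hy. rewrite (Derive_ext_loc _ (v_of n u)).
    - apply is_derive_unique. apply (d_v n Rr eps f u y S); lra.
    - eapply filter_imp; [|apply (loc_in 0 Rr y Hy)]. intros z Hz. apply HB; auto. }
  assert (HD : Derive (fun s => s ^ (n - 1) * Derive (fun t => / t ^ (n - 1) *
        Derive (fun x => x ^ (n - 1) * Derive u x) t) s) r
        = Derive (fun s => s ^ (n - 1) * V1 n u s) r).
  { apply Derive_ext_loc. eapply filter_imp; [|apply (loc_in 0 Rr r Hr)].
    intros z Hz. simpl. rewrite HC; auto. }
  rewrite HD in Hode.
  assert (HexV : ex_derive (V1 n u) r).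
  { unfold V1.
    pose proof (sf_d3 _ _ _ _ _ S r Hr).
    pose proof (sf_d2 _ _ _ _ _ S r ltac:(lra)).
    pose proof (sf_d1 _ _ _ _ _ S r ltac:(lra)).
    auto_derive. repeat split; auto; try lra; nra. }
  assert (HexW : ex_derive (fun s => s ^ (n - 1) * V1 n u s) r).
  { auto_derive. auto. }
  set (DC := Derive (fun s => s ^ (n - 1) * V1 n u s) r) in *.
  assert (Hp : Derive (fun s => Derive u s ^ n) r = INR n * D2 u r * D1 u r ^ Init.Nat.pred n).
  { apply is_derive_unique. apply is_derive_pow. apply (is_derive_D2 n Rr eps f u r S). lra. }
  rewrite Hp in Hode.
  unfold Qf.
  assert (HDC : DC = INR (n - 1) * r ^ Init.Nat.pred (n - 1) * V1 n u r + r ^ (n - 1) * Derive (V1 n u) r).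
  { unfold DC. apply is_derive_unique. auto_derive; auto. change (D1 (fun x => V1 n u x) r) with (Derive (V1 n u) r). simpl. ring. }
  pose proof (sf_d1 _ _ _ _ _ S r ltac:(lra)) as Hd1.
  auto_derive. { repeat split; auto. }
  rewrite <- Hode, HDC.
  change (D1 (fun x => D1 u x) r) with (D2 u r).
  assert (INR n <> 0) by (apply not_0_INR; lia).
  assert (r ^ (n - 1) <> 0) by (apply pow_nonzero; lra).
  change (D1 (fun x => V1 n u x) r) with (Derive (V1 n u) r). simpl. field. auto.
Qed.

Lemma at_right_eps (g : R -> R) : filterlim g (at_right 0) (locally 0) ->
  forall e, 0 < e -> exists d, 0 < d /\ forall a, 0 < a < d -> Rabs (g a) < e.
Proof.
  intros H e He. apply filterlim_locally with (eps := mkposreal e He) in H.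
  destruct H as [d Hd]. exists d; split; [apply cond_pos|].
  intros a Ha. specialize (Hd a). assert (Hb : ball 0 d a).
  { apply (proj2 (ballR _ _ _)). rewrite Rminus_0_r, Rabs_pos_eq; lra. }
  specialize (Hd Hb (proj1 Ha)). bR Hd. rewrite Rminus_0_r in Hd. exact Hd.
Qed.

Lemma pow_abs_le1 x k : Rabs x <= 1 -> (1 <= k)%nat -> Rabs (x ^ k) <= Rabs x.
Proof.
  intros Hx Hk. rewrite <- RPow_abs. induction k as [|k IH]; [lia|].
  destruct k as [|k]; [simpl; lra|].
  simpl. simpl in IH. assert (Rabs x * Rabs x ^ k <= Rabs x) by (apply IH; lia).
  pose proof (Rabs_pos x).
  apply Rle_trans with (1 * (Rabs x * Rabs x ^ k)).
  - apply Rmult_le_compat_r; [apply Rmult_le_pos; auto; apply pow_le; auto|lra].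
  - lra.
Qed.

Lemma pow_le1 x k : 0 <= x <= 1 -> x ^ k <= 1.
Proof.
  intros Hx. induction k as [|k IH]; simpl; [lra|].
  apply Rle_trans with (1 * 1); [|lra].
  apply Rmult_le_compat; auto; try lra. apply pow_le; lra.
Qed.

Lemma Q_lim0 n Rr eps f u : SolF n Rr eps f u -> (2 <= n)%nat -> 0 < Rr -> 0 < eps ->
  forall e, 0 < e -> exists d, 0 < d <= Rr /\ forall a, 0 < a < d -> Rabs (Qf n eps u a) < e.
Proof.
  intros So Hn HR He e Hep.
  set (K := eps * (INR n - 1) + 1).
  assert (HnR : 1 <= INR n - 1) by (assert (2 <= INR n) by (apply (le_INR 2); lia); lra).
  assert (HK : 0 < K) by (unfold K; nra).
  destruct (cont_eps (D1 u) 0 (c_p n Rr eps f u 0 So ltac:(lra)) (Rmin 1 (e/3))) as [d1 [Hd1 Hd1']].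
  { apply Rmin_glb_lt; lra. }
  destruct (cont_eps (D2 u) 0 (sf_c2 _ _ _ _ _ So 0 ltac:(lra)) (e / (6 * K))) as [d2 [Hd2 Hd2']].
  { apply Rdiv_lt_0_compat; lra. }
  destruct (at_right_eps _ (sf_lim _ _ _ _ _ So) (e / (3 * eps + 3))) as [d3 [Hd3 Hd3']].
  { apply Rdiv_lt_0_compat; lra. }
  set (d := Rmin (Rmin d1 d2) (Rmin d3 (Rmin 1 Rr))).
  assert (Hdd : d <= d1 /\ d <= d2 /\ d <= d3 /\ d <= 1 /\ d <= Rr).
  { unfold d. pose proof (Rmin_l (Rmin d1 d2) (Rmin d3 (Rmin 1 Rr))).
    pose proof (Rmin_r (Rmin d1 d2) (Rmin d3 (Rmin 1 Rr))).
    pose proof (Rmin_l d1 d2). pose proof (Rmin_r d1 d2). pose proof (Rmin_l d3 (Rmin 1 Rr)).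
    pose proof (Rmin_r d3 (Rmin 1 Rr)). pose proof (Rmin_l 1 Rr). pose proof (Rmin_r 1 Rr). lra. }
  exists d. split; [|].
  { split; [|tauto]. unfold d. repeat apply Rmin_glb_lt; lra. }
  intros a Ha.
  rewrite (sf_p0 _ _ _ _ _ So) in Hd1'.
  destruct (MVT_cor2 (D1 u) (D2 u) 0 a) as [xi [Hxi1 Hxi2]]; [lra| |].
  { intros c Hc. apply is_derive_Reals. apply (is_derive_D2 n Rr eps f u c So). lra. }
  rewrite (sf_p0 _ _ _ _ _ So) in Hxi1.
  assert (Hpa : D1 u a / a = D2 u xi).
  { assert (Hx : D1 u a = D2 u xi * a) by lra. rewrite Hx. field. lra. }
  assert (Hq1 : Rabs (D2 u a - D2 u 0) < e / (6 * K)) by (apply Hd2'; rewrite Rminus_0_r, Rabs_pos_eq; lra).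
  assert (Hq2 : Rabs (D2 u xi - D2 u 0) < e / (6 * K)) by (apply Hd2'; rewrite Rminus_0_r, Rabs_pos_eq; lra).
  assert (Hp1 : Rabs (D1 u a - 0) < Rmin 1 (e / 3)) by (apply Hd1'; rewrite Rminus_0_r, Rabs_pos_eq; lra).
  rewrite Rminus_0_r in Hp1.
  assert (Hm1 : Rmin 1 (e/3) <= 1) by apply Rmin_l. assert (Hm2 : Rmin 1 (e/3) <= e/3) by apply Rmin_r.
  assert (Ht : Rabs (a ^ (n - 1) * D3 u a) < e / (3 * eps + 3)) by (apply Hd3'; lra).
  assert (Hdec : Qf n eps u a = D1 u a ^ n / INR n - eps * (a ^ (n - 1) * D3 u a)
      - eps * (INR n - 1) * a ^ (n - 2) * (D2 u a - D2 u xi)).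
  { unfold Qf, V1. rewrite <- Hpa.
    destruct n as [|[|k]]; try lia. simpl (S (S k) - 1)%nat. simpl (S (S k) - 2)%nat.
    rewrite Nat.sub_0_r. simpl pow. assert (INR (S (S k)) <> 0) by (apply not_0_INR; lia). field. lra. }
  rewrite Hdec.
  assert (T1 : Rabs (D1 u a ^ n / INR n) < e / 3).
  { unfold Rdiv. rewrite Rabs_mult. rewrite (Rabs_pos_eq (/ INR n)) by (left; apply Rinv_0_lt_compat; lra).
    assert (Rabs (D1 u a ^ n) <= Rabs (D1 u a)) by (apply pow_abs_le1; lra || lia).
    assert (/ INR n <= 1) by (rewrite <- Rinv_1; apply Rinv_le_contravar; lra).
    pose proof (Rabs_pos (D1 u a ^ n)).
    apply Rle_lt_trans with (Rabs (D1 u a ^ n) * 1); [apply Rmult_le_compat_l; lra|]. lra. }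
  assert (T2 : Rabs (eps * (a ^ (n - 1) * D3 u a)) < e / 3).
  { rewrite Rabs_mult, Rabs_pos_eq by lra.
    apply Rle_lt_trans with (eps * (e / (3 * eps + 3))).
    - apply Rmult_le_compat_l; lra.
    - apply Rmult_lt_reg_r with (3 * eps + 3); [lra|].
      replace (eps * (e / (3 * eps + 3)) * (3 * eps + 3)) with (eps * e) by (field; lra).
      nra. }
  assert (T3 : Rabs (eps * (INR n - 1) * a ^ (n - 2) * (D2 u a - D2 u xi)) < e / 3).
  { rewrite Rabs_mult. rewrite (Rabs_mult (eps * (INR n - 1))).
    rewrite (Rabs_pos_eq (eps * (INR n - 1))) by nra.
    assert (Hapow : Rabs (a ^ (n - 2)) <= 1).
    { rewrite Rabs_pos_eq by (apply pow_le; lra). apply pow_le1; lra. }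
    assert (Hdq : Rabs (D2 u a - D2 u xi) < e / (3 * K)).
    { replace (D2 u a - D2 u xi) with ((D2 u a - D2 u 0) - (D2 u xi - D2 u 0)) by ring.
      eapply Rle_lt_trans; [apply Rabs_triang|]. rewrite Rabs_Ropp.
      replace (e / (3 * K)) with (e / (6 * K) + e / (6 * K)) by (field; lra). lra. }
    pose proof (Rabs_pos (a ^ (n - 2))). pose proof (Rabs_pos (D2 u a - D2 u xi)).
    apply Rle_lt_trans with (eps * (INR n - 1) * 1 * Rabs (D2 u a - D2 u xi)).
    - apply Rmult_le_compat_r; auto. apply Rmult_le_compat_l; nra.
    - apply Rle_lt_trans with (K * Rabs (D2 u a - D2 u xi)).
      + unfold K. nra.
      + apply Rmult_lt_reg_r with (/ K); [apply Rinv_0_lt_compat; lra|].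
        replace (K * Rabs (D2 u a - D2 u xi) * / K) with (Rabs (D2 u a - D2 u xi)) by (field; lra).
        replace (e / 3 * / K) with (e / (3 * K)) by (field; lra). lra. }
  eapply Rle_lt_trans; [apply Rabs_triang|]. rewrite Rabs_Ropp.
  eapply Rle_lt_trans; [apply Rplus_le_compat_r; apply Rabs_triang|]. rewrite Rabs_Ropp.
  lra.
Qed.

Lemma Q_eq n Rr e1 e2 f u1 u2 : SolF n Rr e1 f u1 -> SolF n Rr e2 f u2 -> (2 <= n)%nat -> 0 < Rr ->
  0 < e1 -> 0 < e2 -> forall r, 0 < r <= Rr -> Qf n e1 u1 r = Qf n e2 u2 r.
Proof.
  intros S1 S2 Hn HR He1 He2 r Hr.
  assert (Hz : Rabs (Qf n e1 u1 r - Qf n e2 u2 r) <= 0).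
  { apply Rle_plus_epsilon. intros d Hd. rewrite Rplus_0_l.
    destruct (Q_lim0 n Rr e1 f u1 S1 Hn HR He1 (d/2)) as [d1 [Hd1 Hd1']]; [lra|].
    destruct (Q_lim0 n Rr e2 f u2 S2 Hn HR He2 (d/2)) as [d2 [Hd2 Hd2']]; [lra|].
    set (a := Rmin (Rmin d1 d2) r / 2).
    assert (Ha : 0 < a /\ a < d1 /\ a < d2 /\ a < r).
    { unfold a. pose proof (Rmin_l (Rmin d1 d2) r). pose proof (Rmin_r (Rmin d1 d2) r).
      pose proof (Rmin_l d1 d2). pose proof (Rmin_r d1 d2).
      assert (0 < Rmin (Rmin d1 d2) r) by (repeat apply Rmin_glb_lt; lra). lra. }
    destruct (mvt_open (fun x => Qf n e1 u1 x - Qf n e2 u2 x) (fun x => 0) a r) as [c [Hc1 Hc2]]; [lra| | |].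
    - intros c Hc. apply (is_derive_ext_loc (fun x => Qf n e1 u1 x - Qf n e2 u2 x)); [apply filter_forall; reflexivity|].
      pose proof (d_Q n Rr e1 f u1 c S1 Hn ltac:(lra)) as H1.
      pose proof (d_Q n Rr e2 f u2 c S2 Hn ltac:(lra)) as H2.
      pose proof (is_derive_minus _ _ _ _ _ H1 H2) as H3.
      refine (is_derive_eq _ _ _ _ H3 _). unfold minus, plus, opp; simpl. ring.
    - intros c Hc. apply cpt_minus; [apply (c_Q n Rr e1 f u1)|apply (c_Q n Rr e2 f u2)]; auto; lra.
    - assert (Qf n e1 u1 r - Qf n e2 u2 r = Qf n e1 u1 a - Qf n e2 u2 a) by lra.
      rewrite H. specialize (Hd1' a ltac:(lra)). specialize (Hd2' a ltac:(lra)).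
      eapply Rle_trans; [apply Rabs_triang|]. rewrite Rabs_Ropp. lra. }
  pose proof (Rabs_pos (Qf n e1 u1 r - Qf n e2 u2 r)).
  assert (Rabs (Qf n e1 u1 r - Qf n e2 u2 r) = 0) by lra.
  apply Rabs_eq_0 in H0. lra.
Qed.

Lemma Q_mono n Rr eps f u : SolF n Rr eps f u -> (2 <= n)%nat ->
  (forall r, 0 < r < Rr -> 0 <= f r) ->
  forall a b, 0 < a -> a <= b -> b <= Rr -> Qf n eps u a <= Qf n eps u b.
Proof.
  intros So Hn Hf a b Ha Hab Hb.
  apply (incr_open _ (fun x => x ^ (n - 1) * f x) a b); auto.
  - intros c Hc. apply (d_Q n Rr eps f u c So Hn). lra.
  - intros c Hc. apply Rmult_le_pos; [apply pow_le; lra| apply Hf; lra].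
  - intros c Hc. apply (c_Q n Rr eps f u c So Hn). lra.
Qed.

Lemma Q_nonneg n Rr eps f u : SolF n Rr eps f u -> (2 <= n)%nat -> 0 < Rr -> 0 < eps ->
  (forall r, 0 < r < Rr -> 0 <= f r) ->
  forall r, 0 < r <= Rr -> 0 <= Qf n eps u r.
Proof.
  intros So Hn HR He Hf r Hr.
  apply Rle_plus_epsilon. intros d Hd.
  destruct (Q_lim0 n Rr eps f u So Hn HR He d Hd) as [d1 [Hd1 Hd1']].
  set (a := Rmin d1 r / 2).
  assert (Ha : 0 < a /\ a < d1 /\ a < r).
  { unfold a. pose proof (Rmin_l d1 r). pose proof (Rmin_r d1 r).
    assert (0 < Rmin d1 r) by (apply Rmin_glb_lt; lra). lra. }
  specialize (Hd1' a ltac:(lra)). apply Rabs_lt_between in Hd1'.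
  assert (Qf n eps u a <= Qf n eps u r) by (apply (Q_mono n Rr eps f u So Hn Hf); lra).
  lra.
Qed.

Lemma p_nonneg n Rr eps f u : SolF n Rr eps f u -> mono_incr_on Rr u ->
  forall x, 0 <= x <= Rr -> 0 <= D1 u x.
Proof.
  intros So Hm x Hx. destruct (Req_dec x 0) as [->|Hx0].
  - rewrite (sf_p0 _ _ _ _ _ So). lra.
  - apply (deriv_nonneg_left u x (D1 u x) x).
    + apply (is_derive_D1 n Rr eps f u x So Hx).
    + lra.
    + intros h Hh. apply Hm; lra.
Qed.

Lemma q0_nonneg n Rr eps f u : SolF n Rr eps f u -> mono_incr_on Rr u -> 0 < Rr -> 0 <= D2 u 0.
Proof.
  intros So Hm HR.
  apply (deriv_nonneg_right (D1 u) 0 (D2 u 0) Rr).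
  - apply (is_derive_D2 n Rr eps f u 0 So). lra.
  - lra.
  - intros h Hh. rewrite (sf_p0 _ _ _ _ _ So). replace (0 + h) with h by ring.
    apply (p_nonneg n Rr eps f u So Hm). lra.
Qed.

Lemma deriv_max_zero (g : R -> R) x l d : is_derive g x l -> 0 < d ->
  (forall y, Rabs (y - x) < d -> g y <= g x) -> l = 0.
Proof.
  intros Hd Hdp Hm.
  assert (0 <= l).
  { apply (deriv_nonneg_left g x l d Hd Hdp). intros h Hh. apply Hm.
    replace (x - h - x) with (- h) by ring. rewrite Rabs_Ropp, Rabs_pos_eq; lra. }
  assert (0 <= - l).
  { apply (deriv_nonneg_right (fun y => - g y) x (- l) d).
    - exact (is_derive_opp g x l Hd).
    - auto.
    - intros h Hh. assert (g (x + h) <= g x) by (apply Hm; replace (x + h - x) with h by ring; rewrite Rabs_pos_eq; lra). lra. }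
  lra.
Qed.

Lemma deriv_min_zero (g : R -> R) x l d : is_derive g x l -> 0 < d ->
  (forall y, Rabs (y - x) < d -> g x <= g y) -> l = 0.
Proof.
  intros Hd Hdp Hm.
  assert (- l = 0); [|lra].
  apply (deriv_max_zero (fun y => - g y) x (- l) d).
  - exact (is_derive_opp g x l Hd).
  - auto.
  - intros y Hy. specialize (Hm y Hy). lra.
Qed.

Lemma QV n eps u x : eps * (x ^ (n - 1) * V1 n u x) = D1 u x ^ n / INR n - Qf n eps u x.
Proof. unfold Qf. ring. Qed.

Lemma v_R n Rr eps f u : SolF n Rr eps f u -> v_of n u Rr = eps.
Proof. intros So. unfold v_of. exact (sf_bc _ _ _ _ _ So). Qed.

Lemma w_val n u x : w_of n u x = x ^ (n - 1) * D1 u x.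
Proof. reflexivity. Qed.

Lemma v_nonneg n Rr eps f u : SolF n Rr eps f u -> mono_incr_on Rr u -> (2 <= n)%nat -> 0 < Rr -> 0 < eps ->
  (forall r, 0 < r < Rr -> 0 <= f r) ->
  forall x, 0 < x <= Rr -> 0 <= v_of n u x.
Proof.
  intros So Hm Hn HR He Hf x0 Hx0.
  assert (HnR : 1 <= INR n - 1) by (assert (2 <= INR n) by (apply (le_INR 2); lia); lra).
  apply Rnot_lt_le. intros Hneg.
  assert (Hv : forall x, 0 < x <= Rr -> D2 u x <= v_of n u x).
  { intros x Hx. unfold v_of. assert (0 <= (INR n - 1) / x * D1 u x); [|lra].
    apply Rmult_le_pos; [apply Rdiv_le_0_compat; lra|apply (p_nonneg n Rr eps f u So Hm); lra]. }
  pose proof (q0_nonneg n Rr eps f u So Hm HR) as Hq0.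
  destruct (cont_eps (D2 u) 0 (sf_c2 _ _ _ _ _ So 0 ltac:(lra)) (- v_of n u x0)) as [d [Hd Hd']]; [lra|].
  set (c := Rmin d x0 / 2).
  assert (Hc : 0 < c < x0 /\ c < d).
  { unfold c. pose proof (Rmin_l d x0). pose proof (Rmin_r d x0).
    assert (0 < Rmin d x0) by (apply Rmin_glb_lt; lra). lra. }
  assert (Hqc : v_of n u x0 < v_of n u c).
  { specialize (Hd' c ltac:(rewrite Rminus_0_r, Rabs_pos_eq; lra)). apply Rabs_lt_between in Hd'.
    specialize (Hv c ltac:(lra)). lra. }
  destruct (continuity_ab_min (v_of n u) c Rr) as [r2 [Hr2 Hr2']]; [lra| |].
  { intros y Hy. apply (c_v n Rr eps f u y So). lra. }
  assert (Hvr2 : v_of n u r2 <= v_of n u x0) by (apply Hr2; lra).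
  assert (Hr2c : r2 <> c) by (intros ->; lra).
  assert (Hr2R : r2 <> Rr) by (intros ->; rewrite (v_R n Rr eps f u So) in Hvr2; lra).
  assert (Hr2i : c < r2 < Rr) by lra.
  assert (HV0 : V1 n u r2 = 0).
  { apply (deriv_min_zero (v_of n u) r2 (V1 n u r2) (Rmin (r2 - c) (Rr - r2))).
    - apply (d_v n Rr eps f u r2 So). lra.
    - apply Rmin_glb_lt; lra.
    - intros y Hy. apply Hr2. pose proof (Rmin_l (r2 - c) (Rr - r2)). pose proof (Rmin_r (r2 - c) (Rr - r2)).
      apply Rabs_lt_between in Hy. lra. }
  destruct (cont_eps (v_of n u) r2 (c_v n Rr eps f u r2 So ltac:(lra)) (- v_of n u r2)) as [d2 [Hd2 Hd2']]; [lra|].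
  set (dl := Rmin d2 (Rr - r2)).
  assert (Hdl : 0 < dl /\ dl <= d2 /\ dl <= Rr - r2).
  { unfold dl. pose proof (Rmin_l d2 (Rr - r2)). pose proof (Rmin_r d2 (Rr - r2)).
    assert (0 < Rmin d2 (Rr - r2)) by (apply Rmin_glb_lt; lra). lra. }
  assert (Hvneg : forall y, r2 <= y < r2 + dl -> v_of n u y < 0).
  { intros y Hy. specialize (Hd2' y ltac:(rewrite Rabs_pos_eq; lra)). apply Rabs_lt_between in Hd2'. lra. }
  assert (HV1neg : forall s, r2 < s < r2 + dl -> V1 n u s < 0).
  { intros s Hs.
    destruct (mvt_open (w_of n u) (W1 n u) r2 s) as [xi [Hxi1 Hxi2]]; [lra| | |].
    - intros y Hy. apply (d_w n Rr eps f u y So Hn). lra.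
    - intros y Hy. apply cont_of_ex_derive. exists (W1 n u y). apply (d_w n Rr eps f u y So Hn). lra.
    - rewrite W1_eq in Hxi2 by (auto; lra). rewrite !w_val in Hxi2.
      assert (Hvxi : v_of n u xi < 0) by (apply Hvneg; lra).
      assert (xi ^ (n - 1) * v_of n u xi * (s - r2) < 0).
      { assert (0 < xi ^ (n - 1)) by (apply pow_lt; lra).
        assert (xi ^ (n - 1) * v_of n u xi < 0) by nra. nra. }
      assert (Hpr2 : 0 <= D1 u r2) by (apply (p_nonneg n Rr eps f u So Hm); lra).
      assert (Hps : 0 <= D1 u s) by (apply (p_nonneg n Rr eps f u So Hm); lra).
      assert (Hpow : r2 ^ (n - 1) <= s ^ (n - 1)) by (apply pow_incr; lra).
      assert (Hspos : 0 < s ^ (n - 1)) by (apply pow_lt; lra).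
      assert (Hlt : D1 u s < D1 u r2).
      { apply Rnot_le_lt. intros Hle.
        assert (r2 ^ (n - 1) * D1 u r2 <= s ^ (n - 1) * D1 u s).
        { apply Rle_trans with (s ^ (n - 1) * D1 u r2); [apply Rmult_le_compat_r; lra|].
          apply Rmult_le_compat_l; lra. }
        lra. }
      assert (Hpn : D1 u s ^ n < D1 u r2 ^ n) by (apply pow_lt_nonneg; [lra|lia]).
      assert (HQ : Qf n eps u r2 <= Qf n eps u s) by (apply (Q_mono n Rr eps f u So Hn Hf); lra).
      pose proof (QV n eps u s) as E1. pose proof (QV n eps u r2) as E2.
      rewrite HV0, Rmult_0_r, Rmult_0_r in E2.
      assert (Hn0 : 0 < INR n) by lra.
      assert (D1 u s ^ n / INR n < D1 u r2 ^ n / INR n) by (apply Rmult_lt_compat_r; [apply Rinv_0_lt_compat|]; lra).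
      assert (eps * (s ^ (n - 1) * V1 n u s) < 0) by lra.
      assert (s ^ (n - 1) * V1 n u s < 0) by nra. nra. }
  set (s := r2 + dl / 2).
  destruct (mvt_open (v_of n u) (V1 n u) r2 s) as [xi [Hxi1 Hxi2]]; [unfold s; lra| | |].
  - intros y Hy. apply (d_v n Rr eps f u y So). unfold s in *; lra.
  - intros y Hy. apply (c_v n Rr eps f u y So). unfold s in *; lra.
  - assert (V1 n u xi < 0) by (apply HV1neg; unfold s in *; lra).
    assert (v_of n u r2 <= v_of n u s) by (apply Hr2; unfold s in *; lra).
    assert (V1 n u xi * (s - r2) < 0) by (apply Rmult_neg_pos; [lra| unfold s; lra]).
    lra.
Qed.

Lemma pow_ge_base x k : 1 <= x -> (1 <= k)%nat -> x <= x ^ k.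
Proof.
  intros Hx Hk. induction k as [|k IH]; [lia|]. destruct k as [|k]; [simpl; lra|].
  assert (x <= x ^ S k) by (apply IH; lia). simpl in *. nra.
Qed.

Lemma p_bound n Rr eps f u : SolF n Rr eps f u -> mono_incr_on Rr u -> (2 <= n)%nat -> 0 < Rr -> 0 < eps ->
  (forall r, 0 < r < Rr -> 0 <= f r) ->
  forall x, 0 <= x <= Rr -> D1 u x <= 1 + INR n * Qf n eps u Rr + eps * Rr.
Proof.
  intros So Hm Hn HR He Hf x Hx.
  assert (HnR : 1 <= INR n - 1) by (assert (2 <= INR n) by (apply (le_INR 2); lia); lra).
  assert (HQR : 0 <= Qf n eps u Rr) by (apply (Q_nonneg n Rr eps f u So Hn HR He Hf); lra).
  set (Bd := 1 + INR n * Qf n eps u Rr + eps * Rr).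
  assert (HBd : 1 <= Bd) by (unfold Bd; assert (0 <= INR n * Qf n eps u Rr) by nra; nra).
  destruct (continuity_ab_maj (D1 u) 0 Rr) as [rs [Hrs Hrs']]; [lra| |].
  { intros c Hc. apply (c_p n Rr eps f u c So Hc). }
  apply Rle_trans with (D1 u rs); [apply Hrs; auto|].
  destruct (Req_dec rs 0) as [->|H0].
  { rewrite (sf_p0 _ _ _ _ _ So). lra. }
  destruct (Req_dec rs Rr) as [->|H1].
  { assert (Hq : 0 <= D2 u Rr).
    { apply (deriv_nonneg_left (D1 u) Rr (D2 u Rr) Rr).
      - apply (is_derive_D2 n Rr eps f u Rr So). lra.
      - lra.
      - intros h Hh. apply Hrs. lra. }
    pose proof (v_R n Rr eps f u So) as HvR. unfold v_of in HvR.
    assert (Hp : 0 <= D1 u Rr) by (apply (p_nonneg n Rr eps f u So Hm); lra).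
    assert (D1 u Rr / Rr <= (INR n - 1) / Rr * D1 u Rr).
    { unfold Rdiv. rewrite (Rmult_comm (INR n - 1)), Rmult_assoc.
      rewrite (Rmult_comm (D1 u Rr)). apply Rmult_le_compat_l; [left; apply Rinv_0_lt_compat; lra|nra]. }
    assert (Hle : D1 u Rr / Rr <= eps) by lra.
    assert (D1 u Rr <= eps * Rr).
    { apply Rmult_le_compat_r with (r := Rr) in Hle; [|lra].
      replace (D1 u Rr / Rr * Rr) with (D1 u Rr) in Hle by (field; lra). lra. }
    unfold Bd. assert (0 <= INR n * Qf n eps u Rr) by nra. lra. }
  assert (Hi : 0 < rs < Rr) by lra.
  apply Rnot_lt_le. intros Hbig. fold Bd in Hbig.
  set (ps := D1 u rs) in *.
  assert (Hps1 : 1 <= ps) by lra.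
  assert (HQrs : Qf n eps u rs <= Qf n eps u Rr) by (apply (Q_mono n Rr eps f u So Hn Hf); lra).
  assert (Hpsn : ps <= ps ^ n) by (apply pow_ge_base; [lra|lia]).
  assert (Hn0 : 0 < INR n) by lra.
  assert (HQ : Qf n eps u rs < ps ^ n / INR n).
  { apply Rmult_lt_reg_r with (INR n); auto. unfold Rdiv. rewrite Rmult_assoc, Rinv_l, Rmult_1_r by lra.
    unfold Bd in Hbig. assert (INR n * Qf n eps u rs <= INR n * Qf n eps u Rr) by (apply Rmult_le_compat_l; lra).
    assert (0 <= eps * Rr) by nra. nra. }
  pose proof (QV n eps u rs) as E. fold ps in E.
  assert (HVpos : 0 < V1 n u rs).
  { assert (0 < eps * (rs ^ (n - 1) * V1 n u rs)) by lra.
    assert (0 < rs ^ (n - 1)) by (apply pow_lt; lra).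
    assert (0 < rs ^ (n - 1) * V1 n u rs) by nra. nra. }
  assert (Hq0 : D2 u rs = 0).
  { apply (deriv_max_zero (D1 u) rs (D2 u rs) (Rmin rs (Rr - rs))).
    - apply (is_derive_D2 n Rr eps f u rs So). lra.
    - apply Rmin_glb_lt; lra.
    - intros y Hy. apply Hrs. pose proof (Rmin_l rs (Rr - rs)). pose proof (Rmin_r rs (Rr - rs)).
      apply Rabs_lt_between in Hy. lra. }
  assert (Ht : 0 < D3 u rs).
  { unfold V1 in HVpos. rewrite Hq0 in HVpos.
    assert (0 <= (INR n - 1) * (ps / rs ^ 2)).
    { apply Rmult_le_pos; [lra|]. apply Rdiv_le_0_compat; [lra|]. apply pow_lt; lra. }
    fold ps in HVpos.
    replace (0 / rs - ps / rs ^ 2) with (- (ps / rs ^ 2)) in HVpos by (field; lra).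
    nra. }
  destruct (deriv_pos_right (D2 u) rs (D3 u rs) (is_derive_D3 n Rr eps f u rs So ltac:(lra)) Ht Hq0)
    as [d [Hd Hd']].
  set (h := Rmin d (Rr - rs) / 2).
  assert (Hh : 0 < h /\ h < d /\ rs + h < Rr).
  { unfold h. pose proof (Rmin_l d (Rr - rs)). pose proof (Rmin_r d (Rr - rs)).
    assert (0 < Rmin d (Rr - rs)) by (apply Rmin_glb_lt; lra). lra. }
  destruct (mvt_open (D1 u) (D2 u) rs (rs + h)) as [xi [Hxi1 Hxi2]]; [lra| | |].
  - intros y Hy. apply (is_derive_D2 n Rr eps f u y So). lra.
  - intros y Hy. apply (c_p n Rr eps f u y So). lra.
  - assert (0 < D2 u xi).
    { replace xi with (rs + (xi - rs)) by ring. apply Hd'. lra. }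
    assert (D1 u (rs + h) <= D1 u rs) by (apply Hrs; lra).
    assert (0 < D2 u xi * (rs + h - rs)) by (apply Rmult_lt_0_compat; lra).
    fold ps in Hxi2, H2. lra.
Qed.

Lemma V1_lower n Rr eps f u : SolF n Rr eps f u -> mono_incr_on Rr u -> (2 <= n)%nat -> 0 < Rr -> 0 < eps ->
  (forall r, 0 < r < Rr -> 0 <= f r) ->
  forall s, 0 < s <= Rr -> - Qf n eps u Rr / (eps * s ^ (n - 1)) <= V1 n u s.
Proof.
  intros So Hm Hn HR He Hf s Hs.
  pose proof (QV n eps u s) as E.
  assert (HQ : Qf n eps u s <= Qf n eps u Rr) by (apply (Q_mono n Rr eps f u So Hn Hf); lra).
  assert (Hp : 0 <= D1 u s ^ n / INR n).
  { apply Rdiv_le_0_compat; [apply pow_le; apply (p_nonneg n Rr eps f u So Hm); lra|].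
    apply lt_0_INR; lia. }
  assert (Hsp : 0 < eps * s ^ (n - 1)) by (apply Rmult_lt_0_compat; auto; apply pow_lt; lra).
  apply Rmult_le_reg_r with (eps * s ^ (n - 1)); auto.
  unfold Rdiv. rewrite Rmult_assoc, Rinv_l, Rmult_1_r by lra. nra.
Qed.

Lemma V1_abs n Rr eps f u : SolF n Rr eps f u -> mono_incr_on Rr u -> (2 <= n)%nat -> 0 < Rr -> 0 < eps ->
  (forall r, 0 < r < Rr -> 0 <= f r) -> forall Pb, (forall x, 0 <= x <= Rr -> D1 u x <= Pb) ->
  forall s, 0 < s <= Rr -> Rabs (V1 n u s) <= (Pb ^ n + Qf n eps u Rr) / (eps * s ^ (n - 1)).
Proof.
  intros So Hm Hn HR He Hf Pb HPb s Hs.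
  pose proof (QV n eps u s) as E.
  assert (HQ : Qf n eps u s <= Qf n eps u Rr) by (apply (Q_mono n Rr eps f u So Hn Hf); lra).
  assert (HQ0 : 0 <= Qf n eps u s) by (apply (Q_nonneg n Rr eps f u So Hn HR He Hf); lra).
  assert (Hp0 : 0 <= D1 u s) by (apply (p_nonneg n Rr eps f u So Hm); lra).
  assert (Hpn : D1 u s ^ n <= Pb ^ n) by (apply pow_incr; split; auto; apply HPb; lra).
  assert (Hn1 : 1 <= INR n) by (apply (le_INR 1); lia).
  assert (Hp : 0 <= D1 u s ^ n / INR n <= D1 u s ^ n).
  { split. apply Rdiv_le_0_compat; [apply pow_le; auto| lra].
    unfold Rdiv. assert (0 <= D1 u s ^ n) by (apply pow_le; auto).
    assert (/ INR n <= 1) by (rewrite <- Rinv_1; apply Rinv_le_contravar; lra). nra. }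
  assert (Hsp : 0 < eps * s ^ (n - 1)) by (apply Rmult_lt_0_compat; auto; apply pow_lt; lra).
  assert (Heq : V1 n u s = (D1 u s ^ n / INR n - Qf n eps u s) / (eps * s ^ (n - 1))).
  { rewrite <- E. field. split; [apply pow_nonzero; lra| lra]. }
  rewrite Heq. unfold Rdiv at 1. rewrite Rabs_mult, (Rabs_pos_eq (/ _)) by (left; apply Rinv_0_lt_compat; auto).
  apply Rmult_le_compat_r; [left; apply Rinv_0_lt_compat; auto|].
  apply Rabs_le. lra.
Qed.

Lemma v_upper n Rr eps f u : SolF n Rr eps f u -> mono_incr_on Rr u -> (2 <= n)%nat -> 0 < Rr -> 0 < eps ->
  (forall r, 0 < r < Rr -> 0 <= f r) ->
  forall x, 0 < x <= Rr -> v_of n u x <= eps + Qf n eps u Rr * (Rr - x) / (eps * x ^ (n - 1)).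
Proof.
  intros So Hm Hn HR He Hf x Hx.
  set (M := Qf n eps u Rr).
  assert (Hxp : 0 < eps * x ^ (n - 1)) by (apply Rmult_lt_0_compat; auto; apply pow_lt; lra).
  assert (HM : 0 <= M) by (apply (Q_nonneg n Rr eps f u So Hn HR He Hf); lra).
  set (k := M / (eps * x ^ (n - 1))).
  assert (Hk : 0 <= k) by (apply Rdiv_le_0_compat; lra).
  assert (Hinc : v_of n u x + k * x <= v_of n u Rr + k * Rr).
  { apply (incr_open (fun s => v_of n u s + k * s) (fun s => V1 n u s + k) x Rr); [lra| | |].
    - intros c Hc. pose proof (d_v n Rr eps f u c So ltac:(lra)) as H1.
      pose proof (is_derive_scal (fun s => s) c k 1 (is_derive_id c)) as H2.
      pose proof (is_derive_plus _ _ _ _ _ H1 H2) as H3.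
      refine (is_derive_eq _ _ _ _ H3 _). unfold plus, scal; simpl; unfold mult; simpl. ring.
    - intros c Hc. pose proof (V1_lower n Rr eps f u So Hm Hn HR He Hf c ltac:(lra)) as HV.
      fold M in HV.
      assert (M / (eps * c ^ (n - 1)) <= k).
      { unfold k. unfold Rdiv. apply Rmult_le_compat_l; auto.
        apply Rinv_le_contravar; auto. apply Rmult_le_compat_l; [lra|]. apply pow_incr; lra. }
      assert (- M / (eps * c ^ (n - 1)) = - (M / (eps * c ^ (n - 1)))) by (unfold Rdiv; ring).
      lra.
    - intros c Hc. apply cpt_plus; [apply (c_v n Rr eps f u c So); lra|].
      apply cpt_mult; [apply cpt_const|apply cpt_id]. }
  rewrite (v_R n Rr eps f u So) in Hinc.
  replace (M * (Rr - x) / (eps * x ^ (n - 1))) with (k * (Rr - x)) by (assert (x ^ (n - 1) <> 0) by (apply pow_nonzero; lra); unfold k; field; split; auto; lra).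
  lra.
Qed.

Lemma exRI_ab (h : R -> R) a b : a <= b -> (forall x, a <= x <= b -> continuity_pt h x) -> ex_RInt h a b.
Proof.
  intros Hab Hc. apply (@ex_RInt_continuous R_CompleteNormedModule). intros z Hz.
  rewrite Rmin_left, Rmax_right in Hz by lra.
  apply continuity_pt_filterlim. apply Hc; lra.
Qed.

Lemma int_antider (h H D : R -> R) (c a b : R) : a <= b ->
  (forall x, a <= x <= b -> is_derive H x (D x)) ->
  (forall x, a <= x <= b -> continuity_pt D x) ->
  (forall x, a <= x <= b -> continuity_pt h x) ->
  (forall x, a < x < b -> h x <= D x + c) ->
  RInt h a b <= H b - H a + c * (b - a).
Proof.
  intros Hab Hd Hdc Hc Hle.
  assert (HD : is_RInt D a b (H b - H a)).
  { apply (@is_RInt_derive R_CompleteNormedModule).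
    - intros x Hx. rewrite Rmin_left, Rmax_right in Hx by lra. now apply Hd.
    - intros x Hx. rewrite Rmin_left, Rmax_right in Hx by lra. apply continuity_pt_filterlim. now apply Hdc. }
  assert (HDc : is_RInt (fun x => D x + c) a b (H b - H a + c * (b - a))).
  { apply (@is_RInt_plus R_NormedModule); auto.
    pose proof (@is_RInt_const R_NormedModule a b c) as Hk.
    replace (c * (b - a)) with (scal (b - a) c) by (unfold scal; simpl; unfold mult; simpl; ring). exact Hk. }
  apply (is_RInt_le h (fun x => D x + c) a b); auto.
  apply (@RInt_correct R_CompleteNormedModule). apply exRI_ab; auto.
Qed.

Lemma RInt_lin (h1 h2 : R -> R) (c1 : R) a b : a <= b ->
  (forall x, a <= x <= b -> continuity_pt h1 x) ->
  (forall x, a <= x <= b -> continuity_pt h2 x) ->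
  RInt (fun x => c1 * h1 x + h2 x) a b = c1 * RInt h1 a b + RInt h2 a b.
Proof.
  intros Hab H1 H2.
  pose proof (exRI_ab h1 a b Hab H1) as E1. pose proof (exRI_ab h2 a b Hab H2) as E2.
  assert (Hs : is_RInt (fun x => c1 * h1 x + h2 x) a b (c1 * RInt h1 a b + RInt h2 a b)).
  { apply (@is_RInt_plus R_NormedModule).
    - apply (@is_RInt_scal R_NormedModule). apply (@RInt_correct R_CompleteNormedModule); auto.
    - apply (@RInt_correct R_CompleteNormedModule); auto. }
  exact (@is_RInt_unique R_CompleteNormedModule _ _ _ _ Hs).
Qed.

Lemma lim_comb (F1 F2 : R -> R) I1 I2 c1 B Rr : 0 <= c1 ->
  (forall e, 0 < e -> exists a0, 0 < a0 < Rr /\ forall a, 0 < a <= a0 -> I1 - e <= F1 a) ->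
  (forall e, 0 < e -> exists a0, 0 < a0 < Rr /\ forall a, 0 < a <= a0 -> I2 - e <= F2 a) ->
  (forall a, 0 < a < Rr -> c1 * F1 a + F2 a <= B) -> c1 * I1 + I2 <= B.
Proof.
  intros Hc H1 H2 HB. apply Rle_plus_epsilon. intros e He.
  destruct (H1 (e / (2 * (c1 + 1)))) as [a1 [Ha1 Ha1']]. { apply Rdiv_lt_0_compat; lra. }
  destruct (H2 (e / 2)) as [a2 [Ha2 Ha2']]. { lra. }
  set (a := Rmin a1 a2).
  assert (Ha : 0 < a /\ a <= a1 /\ a <= a2).
  { unfold a. pose proof (Rmin_l a1 a2). pose proof (Rmin_r a1 a2). assert (0 < Rmin a1 a2) by (apply Rmin_glb_lt; lra). lra. }
  specialize (Ha1' a ltac:(lra)). specialize (Ha2' a ltac:(lra)). specialize (HB a ltac:(lra)).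
  assert (c1 * (I1 - e / (2 * (c1 + 1))) <= c1 * F1 a) by (apply Rmult_le_compat_l; lra).
  assert (c1 * (e / (2 * (c1 + 1))) <= e / 2).
  { replace (c1 * (e / (2 * (c1 + 1)))) with ((c1 / (c1 + 1)) * (e / 2)) by (field; lra).
    assert (c1 / (c1 + 1) <= 1).
    { apply Rmult_le_reg_r with (c1 + 1); [lra|]. unfold Rdiv. rewrite Rmult_assoc, Rinv_l; lra. }
    assert (0 <= c1 / (c1 + 1)) by (apply Rdiv_le_0_compat; lra). nra. }
  nra.
Qed.

Lemma c_W1 n Rr eps f u x : SolF n Rr eps f u -> 0 <= x <= Rr -> continuity_pt (W1 n u) x.
Proof.
  intros So Hx. unfold W1. pose proof (c_p n Rr eps f u x So Hx). pose proof (sf_c2 _ _ _ _ _ So x Hx).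
  cont_tac.
Qed.

Lemma c_w n Rr eps f u x : SolF n Rr eps f u -> 0 <= x <= Rr -> continuity_pt (w_of n u) x.
Proof.
  intros So Hx. unfold w_of. pose proof (c_p n Rr eps f u x So Hx). cont_tac.
Qed.

Lemma vi_bound n Rr eps f u Pb : SolF n Rr eps f u -> mono_incr_on Rr u -> (2 <= n)%nat -> 0 < Rr -> 0 < eps ->
  (forall r, 0 < r < Rr -> 0 <= f r) -> (forall x, 0 <= x <= Rr -> D1 u x <= Pb) ->
  forall a, 0 < a < Rr ->
  RInt (fun x => x ^ (2 * (n - 1)) * Rabs (v_of n u x) ^ 2) a Rr <=
    Rr ^ (n - 1) * (eps * (Rr ^ (n - 1) * Pb)) + Rr ^ (n - 1) * Qf n eps u Rr * Pb / eps * Rr.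
Proof.
  intros So Hm Hn HR He Hf HPb a Ha.
  set (M := Qf n eps u Rr).
  assert (HM : 0 <= M) by (apply (Q_nonneg n Rr eps f u So Hn HR He Hf); lra).
  assert (HPb0 : 0 <= Pb) by (apply Rle_trans with (D1 u Rr); [apply (p_nonneg n Rr eps f u So Hm)|apply HPb]; lra).
  set (c := Rr ^ (n - 1) * M * Pb / eps).
  assert (HRn : 0 < Rr ^ (n - 1)) by (apply pow_lt; lra).
  assert (Hc0 : 0 <= c) by (unfold c; apply Rdiv_le_0_compat; [|lra]; apply Rmult_le_pos; [apply Rmult_le_pos|]; lra).
  eapply Rle_trans.
  - apply (int_antider _ (fun x => Rr ^ (n - 1) * (v_of n u x * w_of n u x))
      (fun x => Rr ^ (n - 1) * (V1 n u x * w_of n u x + v_of n u x * W1 n u x)) c a Rr); [lra| | | |].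
    + intros x Hx. pose proof (d_v n Rr eps f u x So ltac:(lra)) as H1.
      pose proof (d_w n Rr eps f u x So Hn ltac:(lra)) as H2.
      pose proof (is_derive_mult _ _ _ _ _ H1 H2 ltac:(intros; apply Rmult_comm)) as H3.
      pose proof (is_derive_scal _ x (Rr ^ (n - 1)) _ H3) as H4.
      refine (is_derive_eq _ _ _ _ H4 _). unfold scal, plus, mult; simpl; unfold mult, plus; simpl. ring.
    + intros x Hx. pose proof (c_V1 n Rr eps f u x So ltac:(lra)). pose proof (c_v n Rr eps f u x So ltac:(lra)).
      pose proof (c_w n Rr eps f u x So ltac:(lra)). pose proof (c_W1 n Rr eps f u x So ltac:(lra)).
      apply cpt_mult; [apply cpt_const|]. apply cpt_plus; apply cpt_mult; auto.
    + intros x Hx. apply cpt_mult; [apply cpt_pow, cpt_id| apply cpt_pow, cpt_abs, (c_v n Rr eps f u x So); lra].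
    + intros x Hx.
      rewrite W1_eq by (auto; lra).
      pose proof (QV n eps u x) as E.
      assert (HQx : Qf n eps u x <= M) by (apply (Q_mono n Rr eps f u So Hn Hf); lra).
      assert (HQ0 : 0 <= Qf n eps u x) by (apply (Q_nonneg n Rr eps f u So Hn HR He Hf); lra).
      assert (Hp0 : 0 <= D1 u x) by (apply (p_nonneg n Rr eps f u So Hm); lra).
      assert (Hpb : D1 u x <= Pb) by (apply HPb; lra).
      assert (Hxn : 0 < x ^ (n - 1)) by (apply pow_lt; lra).
      assert (Hxle : x ^ (n - 1) <= Rr ^ (n - 1)) by (apply pow_incr; lra).
      assert (HVw : - (M * Pb / eps) <= V1 n u x * w_of n u x).
      { rewrite w_val.
        assert (Hk : V1 n u x * (x ^ (n - 1) * D1 u x) = (D1 u x ^ n / INR n - Qf n eps u x) * D1 u x / eps).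
        { rewrite <- E. field. lra. }
        rewrite Hk. unfold Rdiv.
        assert (0 <= D1 u x ^ n * / INR n) by (apply Rmult_le_pos; [apply pow_le; auto| left; apply Rinv_0_lt_compat, lt_0_INR; lia]).
        assert (Qf n eps u x * D1 u x <= M * Pb) by (apply Rmult_le_compat; auto).
        assert (0 < / eps) by (apply Rinv_0_lt_compat; auto).
        assert (0 <= D1 u x ^ n * / INR n * D1 u x * / eps) by (apply Rmult_le_pos; [apply Rmult_le_pos|]; lra).
        assert (Qf n eps u x * D1 u x * / eps <= M * Pb * / eps) by (apply Rmult_le_compat_r; lra).
        replace ((D1 u x ^ n * / INR n - Qf n eps u x) * D1 u x * / eps) with
          (D1 u x ^ n * / INR n * D1 u x * / eps - Qf n eps u x * D1 u x * / eps) by ring.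
        lra. }
      rewrite pow2_abs.
      replace (x ^ (2 * (n - 1))) with (x ^ (n - 1) * x ^ (n - 1)) by (rewrite <- pow_add; f_equal; lia).
      set (A := x ^ (n - 1) * v_of n u x ^ 2).
      assert (HA : 0 <= A) by (unfold A; apply Rmult_le_pos; [lra|apply pow2_ge_0]).
      assert (x ^ (n - 1) * A <= Rr ^ (n - 1) * A) by (apply Rmult_le_compat_r; lra).
      assert (Rr ^ (n - 1) * (- (M * Pb / eps)) <= Rr ^ (n - 1) * (V1 n u x * w_of n u x)) by (apply Rmult_le_compat_l; lra).
      unfold c. replace (Rr ^ (n - 1) * M * Pb / eps) with (Rr ^ (n - 1) * (M * Pb / eps)) by (unfold Rdiv; ring).
      unfold A in *. nra.
  - rewrite (v_R n Rr eps f u So). rewrite !w_val.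
    assert (Hva : 0 <= v_of n u a) by (apply (v_nonneg n Rr eps f u So Hm Hn HR He Hf); lra).
    assert (Hwa : 0 <= a ^ (n - 1) * D1 u a) by (apply Rmult_le_pos; [apply pow_le; lra|apply (p_nonneg n Rr eps f u So Hm); lra]).
    assert (HwR : Rr ^ (n - 1) * D1 u Rr <= Rr ^ (n - 1) * Pb) by (apply Rmult_le_compat_l; [lra|apply HPb; lra]).
    assert (0 <= Rr ^ (n - 1) * (v_of n u a * (a ^ (n - 1) * D1 u a))) by (apply Rmult_le_pos; [lra|apply Rmult_le_pos; auto]).
    assert (Rr ^ (n - 1) * (eps * (Rr ^ (n - 1) * D1 u Rr)) <= Rr ^ (n - 1) * (eps * (Rr ^ (n - 1) * Pb))).
    { apply Rmult_le_compat_l; [lra|]. apply Rmult_le_compat_l; lra. }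
    assert (c * (Rr - a) <= c * Rr) by (apply Rmult_le_compat_l; lra).
    unfold c in *. lra.
Qed.

Lemma ref_data n Rr f u1 : SolF n Rr 1 f u1 -> mono_incr_on Rr u1 -> (2 <= n)%nat -> 0 < Rr ->
  (forall r, 0 < r < Rr -> 0 <= f r) ->
  exists S1 BF, 0 <= S1 /\ 0 <= BF /\
    (forall x, 0 < x <= Rr -> Qf n 1 u1 x <= BF * x ^ (n - 2)) /\
    (forall x, 0 < x <= Rr -> Qf n 1 u1 x / x ^ (n - 1) <= S1 ^ n * Rr - V1 n u1 x) /\
    (forall a, 0 < a <= Rr -> v_of n u1 a <= INR n * S1).
Proof.
  intros So Hm Hn HR Hf.
  assert (HnR : 1 <= INR n - 1) by (assert (2 <= INR n) by (apply (le_INR 2); lia); lra).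
  destruct (continuity_ab_maj (fun x => Rabs (D2 u1 x)) 0 Rr) as [xm [Hxm Hxm']]; [lra| |].
  { intros c Hc. apply cpt_abs. apply (sf_c2 _ _ _ _ _ So c Hc). }
  set (S1 := Rabs (D2 u1 xm)).
  assert (HS1 : 0 <= S1) by apply Rabs_pos.
  assert (Hplin : forall x, 0 < x <= Rr -> D1 u1 x <= S1 * x).
  { intros x Hx.
    destruct (MVT_cor2 (D1 u1) (D2 u1) 0 x) as [xi [Hxi1 Hxi2]]; [lra| |].
    { intros c Hc. apply is_derive_Reals. apply (is_derive_D2 n Rr 1 f u1 c So). lra. }
    rewrite (sf_p0 _ _ _ _ _ So) in Hxi1.
    assert (D2 u1 xi <= S1) by (apply Rle_trans with (Rabs (D2 u1 xi)); [apply Rle_abs| apply Hxm; lra]).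
    assert (D2 u1 xi * x <= S1 * x) by (apply Rmult_le_compat_r; lra). lra. }
  assert (HK3 : forall a, 0 < a <= Rr -> v_of n u1 a <= INR n * S1).
  { intros a Ha. unfold v_of.
    assert (D2 u1 a <= S1) by (apply Rle_trans with (Rabs (D2 u1 a)); [apply Rle_abs| apply Hxm; lra]).
    specialize (Hplin a Ha).
    assert (D1 u1 a / a <= S1).
    { apply Rmult_le_reg_r with a; [lra|]. unfold Rdiv. rewrite Rmult_assoc, Rinv_l; lra. }
    replace ((INR n - 1) / a * D1 u1 a) with ((INR n - 1) * (D1 u1 a / a)) by (field; lra).
    assert ((INR n - 1) * (D1 u1 a / a) <= (INR n - 1) * S1) by (apply Rmult_le_compat_l; lra).
    lra. }
  assert (HK2 : forall x, 0 < x <= Rr -> Qf n 1 u1 x / x ^ (n - 1) <= S1 ^ n * Rr - V1 n u1 x).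
  { intros x Hx. pose proof (QV n 1 u1 x) as E.
    assert (Hxn : 0 < x ^ (n - 1)) by (apply pow_lt; lra).
    assert (Hq : Qf n 1 u1 x / x ^ (n - 1) = D1 u1 x ^ n / INR n / x ^ (n - 1) - V1 n u1 x).
    { assert (Qf n 1 u1 x = D1 u1 x ^ n / INR n - x ^ (n - 1) * V1 n u1 x) by lra.
      rewrite H. field. split; [apply not_0_INR; lia|lra]. }
    rewrite Hq.
    assert (Hp0 : 0 <= D1 u1 x) by (apply (p_nonneg n Rr 1 f u1 So Hm); lra).
    assert (Hpn : D1 u1 x ^ n <= (S1 * x) ^ n) by (apply pow_incr; split; auto).
    assert (Hn1 : 1 <= INR n) by (apply (le_INR 1); lia).
    assert (D1 u1 x ^ n / INR n <= D1 u1 x ^ n).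
    { unfold Rdiv. assert (0 <= D1 u1 x ^ n) by (apply pow_le; auto).
      assert (/ INR n <= 1) by (rewrite <- Rinv_1; apply Rinv_le_contravar; lra). nra. }
    assert (D1 u1 x ^ n / INR n / x ^ (n - 1) <= S1 ^ n * x).
    { apply Rmult_le_reg_r with (x ^ (n - 1)); auto. unfold Rdiv. rewrite Rmult_assoc, Rinv_l by lra.
      rewrite Rmult_1_r.
      assert (E2 : (S1 * x) ^ n = S1 ^ n * x * x ^ (n - 1)).
      { assert (Hnn : n = S (n - 1)) by lia. rewrite Rpow_mult_distr. rewrite Hnn at 2.
        rewrite <- tech_pow_Rmult. ring. }
      lra. }
    assert (S1 ^ n * x <= S1 ^ n * Rr) by (apply Rmult_le_compat_l; [apply pow_le|]; lra).
    lra. }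
  set (M1 := Qf n 1 u1 Rr).
  assert (HM1 : 0 <= M1) by (apply (Q_nonneg n Rr 1 f u1 So Hn HR ltac:(lra) Hf); lra).
  set (G := INR n * S1 + S1 ^ n * Rr ^ 2).
  assert (HG : 0 <= G) by (unfold G; assert (0 <= INR n) by apply pos_INR; assert (0 <= S1^n) by (apply pow_le; auto); nra).
  assert (HR2 : 0 < (Rr / 2) ^ (n - 2)) by (apply pow_lt; lra).
  exists S1, (2 ^ (n - 1) * G + M1 / (Rr / 2) ^ (n - 2)).
  split; auto. split.
  { apply Rplus_le_le_0_compat; [apply Rmult_le_pos; [apply pow_le; lra|auto]|apply Rdiv_le_0_compat; auto]. }
  split; [|split; auto].
  intros r Hr.
  assert (HQr : 0 <= Qf n 1 u1 r) by (apply (Q_nonneg n Rr 1 f u1 So Hn HR ltac:(lra) Hf); lra).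
  assert (Hrn2 : 0 < r ^ (n - 2)) by (apply pow_lt; lra).
  destruct (Rle_or_lt r (Rr / 2)) as [Hsmall|Hbig].
  - set (c := Qf n 1 u1 r / (2 * r) ^ (n - 1)).
    assert (H2r : 0 < (2 * r) ^ (n - 1)) by (apply pow_lt; lra).
    assert (Hc : 0 <= c) by (apply Rdiv_le_0_compat; auto).
    assert (Hdec : v_of n u1 (2 * r) + (c - S1 ^ n * Rr) * (2 * r) <= v_of n u1 r + (c - S1 ^ n * Rr) * r).
    { apply (decr_open (fun s => v_of n u1 s + (c - S1 ^ n * Rr) * s) (fun s => V1 n u1 s + (c - S1 ^ n * Rr))
        r (2 * r)); [lra| | |].
      - intros s Hs. pose proof (d_v n Rr 1 f u1 s So ltac:(lra)) as H1.
        pose proof (is_derive_scal (fun s => s) s (c - S1 ^ n * Rr) 1 (is_derive_id s)) as H2.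
        pose proof (is_derive_plus _ _ _ _ _ H1 H2) as H3.
        refine (is_derive_eq _ _ _ _ H3 _). unfold plus, scal; simpl; unfold mult; simpl. ring.
      - intros s Hs. specialize (HK2 s ltac:(lra)).
        assert (HQs : Qf n 1 u1 r <= Qf n 1 u1 s) by (apply (Q_mono n Rr 1 f u1 So Hn Hf); lra).
        assert (Hsn : 0 < s ^ (n - 1)) by (apply pow_lt; lra).
        assert (Hsn2 : s ^ (n - 1) <= (2 * r) ^ (n - 1)) by (apply pow_incr; lra).
        assert (c <= Qf n 1 u1 s / s ^ (n - 1)).
        { unfold c. apply Rle_trans with (Qf n 1 u1 r / s ^ (n - 1)).
          - unfold Rdiv. apply Rmult_le_compat_l; auto. apply Rinv_le_contravar; auto.
          - unfold Rdiv. apply Rmult_le_compat_r; [left; apply Rinv_0_lt_compat|]; auto. }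
        lra.
      - intros s Hs. apply cpt_plus; [apply (c_v n Rr 1 f u1 s So); lra|].
        apply cpt_mult; [apply cpt_const|apply cpt_id]. }
    assert (Hv2r : 0 <= v_of n u1 (2 * r)) by (apply (v_nonneg n Rr 1 f u1 So Hm Hn HR ltac:(lra) Hf); lra).
    assert (Hvr : v_of n u1 r <= INR n * S1) by (apply HK3; lra).
    assert (Hcr : c * r <= G).
    { unfold G. assert (S1 ^ n * Rr * r <= S1 ^ n * Rr ^ 2).
      { simpl. rewrite Rmult_1_r. rewrite Rmult_assoc. apply Rmult_le_compat_l; [apply pow_le; auto|].
        apply Rmult_le_compat_l; lra. }
      nra. }
    assert (Heq : Qf n 1 u1 r = c * r * (2 ^ (n - 1) * r ^ (n - 2))).
    { unfold c. rewrite Rpow_mult_distr.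
      replace (r ^ (n - 1)) with (r * r ^ (n - 2)).
      2: { replace (n - 1)%nat with (S (n - 2)) by lia. reflexivity. }
      field. split; [apply pow_nonzero; lra|]. split; [lra|apply pow_nonzero; lra]. }
    rewrite Heq.
    assert (H2p : 0 < 2 ^ (n - 1) * r ^ (n - 2)) by (apply Rmult_lt_0_compat; [apply pow_lt; lra|auto]).
    assert (0 <= M1 / (Rr / 2) ^ (n - 2) * r ^ (n - 2)) by (apply Rmult_le_pos; [apply Rdiv_le_0_compat|]; lra).
    assert (c * r * (2 ^ (n - 1) * r ^ (n - 2)) <= G * (2 ^ (n - 1) * r ^ (n - 2))) by (apply Rmult_le_compat_r; lra).
    nra.
  - assert (Qf n 1 u1 r <= M1) by (apply (Q_mono n Rr 1 f u1 So Hn Hf); lra).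
    assert ((Rr / 2) ^ (n - 2) <= r ^ (n - 2)) by (apply pow_incr; lra).
    assert (M1 <= M1 / (Rr / 2) ^ (n - 2) * r ^ (n - 2)).
    { unfold Rdiv. rewrite Rmult_assoc. rewrite <- (Rmult_1_r M1) at 1. apply Rmult_le_compat_l; auto.
      apply Rmult_le_reg_l with ((Rr / 2) ^ (n - 2)); auto. rewrite <- Rmult_assoc, Rinv_r; lra. }
    assert (0 <= 2 ^ (n - 1) * G * r ^ (n - 2)) by (apply Rmult_le_pos; [apply Rmult_le_pos; [apply pow_le|]|]; lra).
    nra.
Qed.

Lemma RInt_lin2 (h1 h2 : R -> R) (c1 c2 : R) a b : a <= b ->
  (forall x, a <= x <= b -> continuity_pt h1 x) ->
  (forall x, a <= x <= b -> continuity_pt h2 x) ->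
  RInt (fun x => c1 * h1 x + c2 * h2 x) a b = c1 * RInt h1 a b + c2 * RInt h2 a b.
Proof.
  intros Hab H1 H2.
  pose proof (exRI_ab h1 a b Hab H1) as E1. pose proof (exRI_ab h2 a b Hab H2) as E2.
  assert (Hs : is_RInt (fun x => c1 * h1 x + c2 * h2 x) a b (c1 * RInt h1 a b + c2 * RInt h2 a b)).
  { apply (@is_RInt_plus R_NormedModule).
    - apply (@is_RInt_scal R_NormedModule). apply (@RInt_correct R_CompleteNormedModule); auto.
    - apply (@is_RInt_scal R_NormedModule). apply (@RInt_correct R_CompleteNormedModule); auto. }
  exact (@is_RInt_unique R_CompleteNormedModule _ _ _ _ Hs).
Qed.

Lemma Rpower_pow' r k : 0 < r -> r ^ k = Rpower r (INR k).
Proof. intros; symmetry; apply Rpower_pow; auto. Qed.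

Lemma Rpower_mul r a b : Rpower r a * Rpower r b = Rpower r (a + b).
Proof. symmetry. apply Rpower_plus. Qed.

Lemma Rpower_pos r a : 0 < Rpower r a.
Proof. unfold Rpower. apply exp_pos. Qed.

Lemma amgm X Y k : 0 < k -> X * Y <= k * X ^ 2 + Y ^ 2 / (4 * k).
Proof.
  intros Hk. assert (0 <= (2 * k * X - Y) ^ 2) by apply pow2_ge_0.
  apply Rmult_le_reg_r with (4 * k); [lra|].
  replace ((k * X ^ 2 + Y ^ 2 / (4 * k)) * (4 * k)) with (4 * k * k * X ^ 2 + Y ^ 2) by (field; lra).
  nra.
Qed.

Lemma is_derive_Rpower x a : 0 < x -> is_derive (fun y => Rpower y a) x (a * Rpower x (a - 1)).
Proof. intros Hx. apply is_derive_Reals. apply derivable_pt_lim_power; auto. Qed.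

Lemma INR_n1 n : (1 <= n)%nat -> INR (n - 1) = INR n - 1.
Proof. intros; rewrite minus_INR by lia; simpl; ring. Qed.
Lemma INR_n2 n : (2 <= n)%nat -> INR (n - 2) = INR n - 2.
Proof. intros; rewrite minus_INR by lia; simpl; ring. Qed.

Lemma kbound n Rr eps (u u1 : R -> R) S1 BF alpha x :
  (2 <= n)%nat -> 0 < Rr -> alpha < INR n - 1 -> 0 < x <= Rr -> 0 <= Qf n eps u x ->
  Qf n eps u x = Qf n 1 u1 x ->
  Qf n 1 u1 x <= BF * x ^ (n - 2) ->
  Qf n 1 u1 x / x ^ (n - 1) <= S1 ^ n * Rr - V1 n u1 x ->
  Rpower x (2 - INR n - alpha) * Qf n eps u x ^ 2 <= BF * Rpower Rr (INR n - 1 - alpha) * (S1 ^ n * Rr - V1 n u1 x).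
Proof.
  intros Hn HR Ha Hx HQ0 HQ K1 K2.
  rewrite HQ in *. set (Q := Qf n 1 u1 x) in *.
  assert (Hxn : 0 < x ^ (n - 1)) by (apply pow_lt; lra).
  assert (E1 : Rpower x (2 - INR n - alpha) = Rpower x (1 - alpha) / x ^ (n - 1)).
  { rewrite Rpower_pow' by lra. rewrite INR_n1 by lia. unfold Rdiv.
    rewrite <- Rpower_Ropp, Rpower_mul. f_equal. ring. }
  assert (E2 : x ^ (n - 2) * Rpower x (1 - alpha) = Rpower x (INR n - 1 - alpha)).
  { rewrite Rpower_pow' by lra. rewrite INR_n2 by lia. rewrite Rpower_mul. f_equal. ring. }
  assert (HRp : Rpower x (INR n - 1 - alpha) <= Rpower Rr (INR n - 1 - alpha)).
  { apply Rle_Rpower_l; lra. }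
  assert (HQb : Q * Rpower x (1 - alpha) <= BF * Rpower Rr (INR n - 1 - alpha)).
  { apply Rle_trans with (BF * x ^ (n - 2) * Rpower x (1 - alpha)).
    - apply Rmult_le_compat_r; [left; apply Rpower_pos|]. auto.
    - rewrite Rmult_assoc, E2. 
      assert (0 <= BF).
      { assert (0 < x ^ (n - 2)) by (apply pow_lt; lra).
        destruct (Rle_or_lt 0 BF); auto. nra. }
      apply Rmult_le_compat_l; auto. }
  assert (Hg : 0 <= Q / x ^ (n - 1)) by (apply Rdiv_le_0_compat; lra).
  rewrite E1.
  replace (Rpower x (1 - alpha) / x ^ (n - 1) * Q ^ 2) with ((Q / x ^ (n - 1)) * (Q * Rpower x (1 - alpha)))
    by (field; lra).
  assert (0 <= Q * Rpower x (1 - alpha)) by (apply Rmult_le_pos; [lra|left; apply Rpower_pos]).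
  apply Rle_trans with ((S1 ^ n * Rr - V1 n u1 x) * (Q * Rpower x (1 - alpha))).
  - apply Rmult_le_compat_r; auto.
  - rewrite Rmult_comm. apply Rmult_le_compat_r; lra.
Qed.

Definition h7a n (u : R -> R) alpha x := Rpower x (INR n - 2 - alpha) * Rabs (v_of n u x) ^ 2.
Definition h7b n (u : R -> R) alpha x := Rpower x (- alpha) * D1 u x ^ n * v_of n u x.

Lemma c_h7a n Rr eps f u alpha x : SolF n Rr eps f u -> 0 < x <= Rr -> continuity_pt (h7a n u alpha) x.
Proof.
  intros So Hx. unfold h7a. apply cpt_mult.
  - apply cpt_Rpower; [apply cpt_id|lra].
  - apply cpt_pow, cpt_abs, (c_v n Rr eps f u x So); lra.
Qed.

Lemma c_h7b n Rr eps f u alpha x : SolF n Rr eps f u -> 0 < x <= Rr -> continuity_pt (h7b n u alpha) x.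
Proof.
  intros So Hx. unfold h7b. apply cpt_mult; [apply cpt_mult|].
  - apply cpt_Rpower; [apply cpt_id|lra].
  - apply cpt_pow, (c_p n Rr eps f u x So); lra.
  - apply (c_v n Rr eps f u x So); lra.
Qed.

Record RefD n Rr f u1 S1 BF : Prop := {
  rd_sol : SolF n Rr 1 f u1;
  rd_mono : mono_incr_on Rr u1;
  rd_S1 : 0 <= S1;
  rd_BF : 0 <= BF;
  rd_K1 : forall x, 0 < x <= Rr -> Qf n 1 u1 x <= BF * x ^ (n - 2);
  rd_K2 : forall x, 0 < x <= Rr -> Qf n 1 u1 x / x ^ (n - 1) <= S1 ^ n * Rr - V1 n u1 x;
  rd_K3 : forall a, 0 < a <= Rr -> v_of n u1 a <= INR n * S1 }.

Definition B7 n Rr eps S1 BF alpha :=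
  eps ^ 3 * Rpower Rr (INR n - 1 - alpha) / 2 +
  BF * Rpower Rr (INR n - 1 - alpha) / (eps * (INR n - 1 - alpha)) * (S1 ^ n * Rr ^ 2 + INR n * S1).

Lemma vii_bound n Rr eps f u u1 S1 BF alpha :
  SolF n Rr eps f u -> mono_incr_on Rr u -> (2 <= n)%nat -> 0 < Rr -> 0 < eps ->
  (forall r, 0 < r < Rr -> 0 <= f r) -> RefD n Rr f u1 S1 BF ->
  (forall x, 0 < x <= Rr -> Qf n eps u x = Qf n 1 u1 x) -> alpha < INR n - 1 ->
  forall a, 0 < a < Rr ->
  / INR n * RInt (h7b n u alpha) a Rr + (eps * (INR n - 1 - alpha) / 4) * RInt (h7a n u alpha) a Rr
  <= B7 n Rr eps S1 BF alpha.
Proof.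
  intros So Hm Hn HR He Hf Rd HQe Ha a Haa.
  set (beta := INR n - 1 - alpha).
  assert (Hb : 0 < beta) by (unfold beta; lra).
  set (C := BF * Rpower Rr beta / (eps * beta)).
  assert (HC : 0 <= C) by (unfold C; apply Rdiv_le_0_compat; [apply Rmult_le_pos; [apply (rd_BF _ _ _ _ _ _ Rd)|left; apply Rpower_pos]|nra]).
  pose proof (rd_sol _ _ _ _ _ _ Rd) as So1.
  assert (Hn0 : 0 < INR n) by (apply lt_0_INR; lia).
  rewrite <- RInt_lin2; [| lra | intros x Hx; apply (c_h7b n Rr eps f u); auto; lra | intros x Hx; apply (c_h7a n Rr eps f u); auto; lra].
  eapply Rle_trans.
  - apply (int_antider _
      (fun x => eps / 2 * (Rpower x beta * v_of n u x ^ 2) - C * v_of n u1 x)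
      (fun x => eps / 2 * (beta * Rpower x (beta - 1) * v_of n u x ^ 2 + Rpower x beta * (2 * v_of n u x * V1 n u x))
                - C * V1 n u1 x)
      (C * (S1 ^ n * Rr)) a Rr); [lra| | | |].
    + intros x Hx.
      pose proof (is_derive_Rpower x beta ltac:(lra)) as H1.
      pose proof (is_derive_pow (v_of n u) 2 x _ (d_v n Rr eps f u x So ltac:(lra))) as H2.
      pose proof (is_derive_mult _ _ _ _ _ H1 H2 ltac:(intros; apply Rmult_comm)) as H3.
      pose proof (is_derive_scal _ x (eps / 2) _ H3) as H4.
      pose proof (is_derive_scal _ x C _ (d_v n Rr 1 f u1 x So1 ltac:(lra))) as H5.
      pose proof (is_derive_minus _ _ _ _ _ H4 H5) as H6.
      refine (is_derive_eq _ _ _ _ H6 _). unfold scal, plus, mult, minus, opp; simpl; unfold mult, plus, opp; simpl. ring.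
    + intros x Hx. apply cpt_minus; [apply cpt_mult; [apply cpt_const|]|apply cpt_mult; [apply cpt_const|apply (c_V1 n Rr 1 f u1 x So1); lra]].
      pose proof (c_v n Rr eps f u x So ltac:(lra)). pose proof (c_V1 n Rr eps f u x So ltac:(lra)).
      apply cpt_plus; apply cpt_mult; [apply cpt_mult; [apply cpt_const| apply cpt_Rpower; [apply cpt_id|lra]]|apply cpt_pow; auto|apply cpt_Rpower; [apply cpt_id|lra]|].
      apply cpt_mult; [apply cpt_mult; [apply cpt_const|]|]; auto.
    + intros x Hx. apply cpt_plus; apply cpt_mult; try apply cpt_const;
      [apply (c_h7b n Rr eps f u)|apply (c_h7a n Rr eps f u)]; auto; lra.
    + intros x Hx. unfold h7a, h7b.
      set (v := v_of n u x). set (p := D1 u x). set (V := V1 n u x). set (Q := Qf n eps u x).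
      pose proof (QV n eps u x) as E. fold V p Q in E.
      assert (HQ0 : 0 <= Q) by (apply (Q_nonneg n Rr eps f u So Hn HR He Hf); lra).
      assert (HK := kbound n Rr eps u u1 S1 BF alpha x Hn HR Ha ltac:(lra) HQ0 (HQe x ltac:(lra))
              (rd_K1 _ _ _ _ _ _ Rd x ltac:(lra)) (rd_K2 _ _ _ _ _ _ Rd x ltac:(lra))).
      fold Q beta in HK.
      assert (RP1 : Rpower x beta = Rpower x (- alpha) * x ^ (n - 1)).
      { rewrite Rpower_pow' by lra. rewrite INR_n1 by lia. rewrite Rpower_mul. f_equal. unfold beta; ring. }
      assert (RP2 : Rpower x (beta - 1) = Rpower x (INR n - 2 - alpha)) by (f_equal; unfold beta; ring).
      assert (Ham := amgm (Rpower x ((INR n - 2 - alpha) / 2) * v) (Rpower x ((2 - INR n - alpha) / 2) * Q)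
                      (eps * beta / 4) ltac:(nra)).
      assert (X1 : Rpower x ((INR n - 2 - alpha) / 2) * v * (Rpower x ((2 - INR n - alpha) / 2) * Q)
                   = Rpower x (- alpha) * v * Q).
      { replace (Rpower x ((INR n - 2 - alpha) / 2) * v * (Rpower x ((2 - INR n - alpha) / 2) * Q))
          with ((Rpower x ((INR n - 2 - alpha) / 2) * Rpower x ((2 - INR n - alpha) / 2)) * v * Q) by ring.
        rewrite Rpower_mul. do 3 f_equal. field. }
      assert (X2 : (Rpower x ((INR n - 2 - alpha) / 2) * v) ^ 2 = Rpower x (INR n - 2 - alpha) * v ^ 2).
      { rewrite Rpow_mult_distr. f_equal. simpl. rewrite Rmult_1_r, Rpower_mul. f_equal. field. }
      assert (X3 : (Rpower x ((2 - INR n - alpha) / 2) * Q) ^ 2 = Rpower x (2 - INR n - alpha) * Q ^ 2).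
      { rewrite Rpow_mult_distr. f_equal. simpl. rewrite Rmult_1_r, Rpower_mul. f_equal. field. }
      rewrite X1, X2, X3 in Ham.
      rewrite pow2_abs. rewrite RP2.
      assert (HD : eps / 2 * (Rpower x beta * (2 * v * V)) = Rpower x (- alpha) * v * (p ^ n / INR n - Q)).
      { rewrite <- E, RP1. field. }
      replace (eps / 2 * (beta * Rpower x (INR n - 2 - alpha) * v ^ 2 + Rpower x beta * (2 * v * V)))
        with (eps / 2 * beta * Rpower x (INR n - 2 - alpha) * v ^ 2 + eps / 2 * (Rpower x beta * (2 * v * V))) by ring.
      rewrite HD.
      assert (HCk : Rpower x (2 - INR n - alpha) * Q ^ 2 / (4 * (eps * beta / 4)) <= C * (S1 ^ n * Rr - V1 n u1 x)).
      { unfold C. replace (4 * (eps * beta / 4)) with (eps * beta) by field.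
        unfold Rdiv. replace (BF * Rpower Rr beta * / (eps * beta) * (S1 ^ n * Rr - V1 n u1 x))
          with (BF * Rpower Rr beta * (S1 ^ n * Rr - V1 n u1 x) * / (eps * beta)) by ring.
        apply Rmult_le_compat_r; [left; apply Rinv_0_lt_compat; nra|]. exact HK. }
      replace (/ INR n * (Rpower x (- alpha) * p ^ n * v)) with (Rpower x (- alpha) * v * (p ^ n / INR n)) by (field; lra).
      nra.
  -
    rewrite (v_R n Rr eps f u So), (v_R n Rr 1 f u1 So1).
    assert (Hva : 0 <= v_of n u1 a) by (apply (v_nonneg n Rr 1 f u1 So1 (rd_mono _ _ _ _ _ _ Rd) Hn HR ltac:(lra) Hf); lra).
    assert (Hva' : v_of n u1 a <= INR n * S1) by (apply (rd_K3 _ _ _ _ _ _ Rd); lra).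
    assert (0 <= eps / 2 * (Rpower a beta * v_of n u a ^ 2)).
    { apply Rmult_le_pos; [lra|]. apply Rmult_le_pos; [left; apply Rpower_pos|apply pow2_ge_0]. }
    unfold B7. fold beta. fold C.
    assert (HS : 0 <= S1 ^ n) by (apply pow_le, (rd_S1 _ _ _ _ _ _ Rd)).
    assert (C * (S1 ^ n * Rr) * (Rr - a) <= C * (S1 ^ n * Rr ^ 2)).
    { rewrite Rmult_assoc. apply Rmult_le_compat_l; auto. simpl. rewrite Rmult_1_r.
      rewrite Rmult_assoc. apply Rmult_le_compat_l; auto. apply Rmult_le_compat_l; lra. }
    assert (C * v_of n u1 a <= C * (INR n * S1)) by (apply Rmult_le_compat_l; auto).
    replace (eps / 2 * (Rpower Rr beta * eps ^ 2)) with (eps ^ 3 * Rpower Rr beta / 2) by (simpl; field).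
    nra.
Qed.

Lemma int_antider2 (h k H D : R -> R) (c a b : R) : a <= b ->
  (forall x, a <= x <= b -> is_derive H x (D x)) ->
  (forall x, a <= x <= b -> continuity_pt D x) ->
  (forall x, a <= x <= b -> continuity_pt h x) ->
  (forall x, a <= x <= b -> continuity_pt k x) ->
  (forall x, a < x < b -> h x <= D x + k x + c) ->
  RInt h a b <= H b - H a + RInt k a b + c * (b - a).
Proof.
  intros Hab Hd Hdc Hc Hk Hle.
  assert (E : RInt (fun x => 1 * h x + (-1) * k x) a b = 1 * RInt h a b + (-1) * RInt k a b)
    by (apply RInt_lin2; auto).
  assert (Hi : RInt (fun x => 1 * h x + (-1) * k x) a b <= H b - H a + c * (b - a)).
  { apply (int_antider _ H D c a b); auto.
    - intros x Hx. apply cpt_plus; apply cpt_mult; try apply cpt_const; auto.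
    - intros x Hx. specialize (Hle x Hx). lra. }
  lra.
Qed.

Lemma RInt_scal' (h : R -> R) c a b : a <= b -> (forall x, a <= x <= b -> continuity_pt h x) ->
  RInt (fun x => c * h x) a b = c * RInt h a b.
Proof.
  intros Hab Hc.
  assert (Hs : is_RInt (fun x => c * h x) a b (c * RInt h a b)).
  { apply (@is_RInt_scal R_NormedModule). apply (@RInt_correct R_CompleteNormedModule). apply exRI_ab; auto. }
  exact (@is_RInt_unique R_CompleteNormedModule _ _ _ _ Hs).
Qed.

Lemma h7b_nonneg n Rr eps f u alpha x : SolF n Rr eps f u -> mono_incr_on Rr u -> (2 <= n)%nat -> 0 < Rr -> 0 < eps ->
  (forall r, 0 < r < Rr -> 0 <= f r) -> 0 < x <= Rr -> 0 <= h7b n u alpha x.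
Proof.
  intros So Hm Hn HR He Hf Hx. unfold h7b.
  apply Rmult_le_pos; [apply Rmult_le_pos|].
  - left; apply Rpower_pos.
  - apply pow_le, (p_nonneg n Rr eps f u So Hm); lra.
  - apply (v_nonneg n Rr eps f u So Hm Hn HR He Hf); lra.
Qed.

Lemma h7a_nonneg n u alpha x : 0 <= h7a n u alpha x.
Proof. unfold h7a. apply Rmult_le_pos; [left; apply Rpower_pos|]. rewrite pow2_abs. apply pow2_ge_0. Qed.

Lemma h7b_int n Rr eps f u u1 S1 BF alpha :
  SolF n Rr eps f u -> mono_incr_on Rr u -> (2 <= n)%nat -> 0 < Rr -> 0 < eps ->
  (forall r, 0 < r < Rr -> 0 <= f r) -> RefD n Rr f u1 S1 BF ->
  (forall x, 0 < x <= Rr -> Qf n eps u x = Qf n 1 u1 x) -> alpha < INR n - 1 ->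
  forall a, 0 < a < Rr -> RInt (h7b n u alpha) a Rr <= INR n * B7 n Rr eps S1 BF alpha.
Proof.
  intros So Hm Hn HR He Hf Rd HQe Ha a Haa.
  pose proof (vii_bound n Rr eps f u u1 S1 BF alpha So Hm Hn HR He Hf Rd HQe Ha a Haa) as H.
  assert (0 <= RInt (h7a n u alpha) a Rr).
  { apply RInt_ge_0; [lra| apply (exRI_ab); [lra|intros; apply (c_h7a n Rr eps f u); auto; lra]|].
    intros; apply h7a_nonneg. }
  assert (0 <= eps * (INR n - 1 - alpha) / 4) by (apply Rdiv_le_0_compat; [apply Rmult_le_pos|]; lra).
  assert (Hn0 : 0 < INR n) by (apply lt_0_INR; lia).
  assert (/ INR n * RInt (h7b n u alpha) a Rr <= B7 n Rr eps S1 BF alpha) by nra.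
  apply Rmult_le_compat_l with (r := INR n) in H2; [|lra].
  rewrite <- Rmult_assoc, Rinv_r, Rmult_1_l in H2 by lra. exact H2.
Qed.

Definition h8a n (u : R -> R) x := x ^ (n - 1) * Rabs (V1 n u x) ^ 2.
Definition h8b n (u : R -> R) x := D1 u x ^ (n - 1) * Rabs (v_of n u x) ^ 2.

Lemma viii_bound n Rr eps f u u1 S1 BF Pb :
  SolF n Rr eps f u -> mono_incr_on Rr u -> (3 <= n)%nat -> 0 < Rr -> 0 < eps ->
  (forall r, 0 < r < Rr -> 0 <= f r) -> RefD n Rr f u1 S1 BF ->
  (forall x, 0 < x <= Rr -> Qf n eps u x = Qf n 1 u1 x) ->
  (forall x, 0 <= x <= Rr -> D1 u x <= Pb) ->
  forall a, 0 < a < Rr ->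
  eps * RInt (h8a n u) a Rr + RInt (h8b n u) a Rr <=
    eps * Pb ^ n + (INR n - 1) * (INR n * B7 n Rr eps S1 BF 1)
    + BF * Rpower Rr (INR n - 2) / eps * (S1 ^ n * Rr ^ 2 + INR n * S1).
Proof.
  intros So Hm Hn3 HR He Hf Rd HQe HPb a Haa.
  assert (Hn : (2 <= n)%nat) by lia.
  assert (Ha1 : 1 < INR n - 1) by (assert (H3 : INR 3 <= INR n) by (apply le_INR; lia); simpl in H3; lra).
  assert (Hn0 : 0 < INR n) by (apply lt_0_INR; lia).
  pose proof (rd_sol _ _ _ _ _ _ Rd) as So1.
  set (C := BF * Rpower Rr (INR n - 2) / eps).
  assert (HC : 0 <= C) by (unfold C; apply Rdiv_le_0_compat; [apply Rmult_le_pos; [apply (rd_BF _ _ _ _ _ _ Rd)|left; apply Rpower_pos]|lra]).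
  assert (Hc8a : forall x, a <= x <= Rr -> continuity_pt (h8a n u) x).
  { intros x Hx. unfold h8a. apply cpt_mult; [apply cpt_pow, cpt_id|apply cpt_pow, cpt_abs, (c_V1 n Rr eps f u x So); lra]. }
  assert (Hc8b : forall x, a <= x <= Rr -> continuity_pt (h8b n u) x).
  { intros x Hx. unfold h8b. apply cpt_mult; [apply cpt_pow, (c_p n Rr eps f u x So); lra|apply cpt_pow, cpt_abs, (c_v n Rr eps f u x So); lra]. }
  rewrite <- (Rmult_1_l (RInt (h8b n u) a Rr)).
  rewrite <- RInt_lin2; [|lra|auto|auto].
  eapply Rle_trans.
  - apply (int_antider2 _ (fun x => (INR n - 1) * h7b n u 1 x)
      (fun x => v_of n u x * (/ INR n * D1 u x ^ n) - C * v_of n u1 x)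
      (fun x => V1 n u x * (D1 u x ^ n / INR n) + v_of n u x * (INR n * D2 u x * D1 u x ^ Init.Nat.pred n / INR n)
                - C * V1 n u1 x)
      (C * (S1 ^ n * Rr)) a Rr); [lra| | | | |].
    + intros x Hx.
      pose proof (d_v n Rr eps f u x So ltac:(lra)) as H1.
      pose proof (is_derive_pow (D1 u) n x _ (is_derive_D2 n Rr eps f u x So ltac:(lra))) as H2.
      pose proof (is_derive_scal _ x (/ INR n) _ H2) as H2'.
      pose proof (is_derive_mult _ _ _ _ _ H1 H2' ltac:(intros; apply Rmult_comm)) as H3.
      pose proof (is_derive_scal _ x C _ (d_v n Rr 1 f u1 x So1 ltac:(lra))) as H5.
      pose proof (is_derive_minus _ _ _ _ _ H3 H5) as H6.
      refine (is_derive_eq _ _ _ _ H6 _). unfold scal, plus, mult, minus, opp; simpl; unfold mult, plus, opp; simpl. field. lra.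
    + intros x Hx. pose proof (c_V1 n Rr eps f u x So ltac:(lra)). pose proof (c_v n Rr eps f u x So ltac:(lra)).
      pose proof (c_p n Rr eps f u x So ltac:(lra)). pose proof (sf_c2 _ _ _ _ _ So x ltac:(lra)).
      pose proof (c_V1 n Rr 1 f u1 x So1 ltac:(lra)).
      apply cpt_minus; [|apply cpt_mult; [apply cpt_const|auto]].
      apply cpt_plus; apply cpt_mult; auto.
      * apply cpt_div; [apply cpt_pow; auto|apply cpt_const|lra].
      * apply cpt_div; [|apply cpt_const|lra]. apply cpt_mult; [apply cpt_mult; [apply cpt_const|auto]|apply cpt_pow; auto].
    + intros x Hx. apply cpt_plus; apply cpt_mult; try apply cpt_const; auto.
    + intros x Hx. apply cpt_mult; [apply cpt_const|]. apply (c_h7b n Rr eps f u); auto; lra.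
    + intros x Hx. unfold h8a, h8b, h7b.
      set (v := v_of n u x). set (p := D1 u x). set (V := V1 n u x). set (Q := Qf n eps u x).
      pose proof (QV n eps u x) as E. fold V p Q in E.
      assert (HQ0 : 0 <= Q) by (apply (Q_nonneg n Rr eps f u So Hn HR He Hf); lra).
      assert (HK := kbound n Rr eps u u1 S1 BF 1 x Hn HR ltac:(lra) ltac:(lra) HQ0 (HQe x ltac:(lra))
              (rd_K1 _ _ _ _ _ _ Rd x ltac:(lra)) (rd_K2 _ _ _ _ _ _ Rd x ltac:(lra))).
      fold Q in HK.
      assert (Hxn : 0 < x ^ (n - 1)) by (apply pow_lt; lra).
      assert (RP : Rpower x (2 - INR n - 1) = / x ^ (n - 1)).
      { rewrite Rpower_pow' by lra. rewrite INR_n1 by lia. rewrite <- (Rpower_Ropp x (INR n - 1)). f_equal. ring. }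
      rewrite RP in HK.
      assert (Rm1 : Rpower x (Ropp 1) = / x).
      { rewrite Rpower_Ropp, Rpower_1; lra. }
      rewrite Rm1.
      assert (Hq : D2 u x = v - (INR n - 1) / x * p) by (unfold v, v_of; fold p; ring).
      rewrite Hq. rewrite !pow2_abs.
      assert (HV : V = (p ^ n / INR n - Q) / (eps * x ^ (n - 1))).
      { rewrite <- E. field. split; lra. }
      assert (HVQ : - (V * Q) <= C * (S1 ^ n * Rr - V1 n u1 x)).
      { rewrite HV. unfold C.
        assert (0 <= p ^ n / INR n * Q / (eps * x ^ (n - 1))).
        { apply Rdiv_le_0_compat; [apply Rmult_le_pos; [apply Rdiv_le_0_compat; [apply pow_le, (p_nonneg n Rr eps f u So Hm); lra|lra]|lra]|nra]. }
        replace (- ((p ^ n / INR n - Q) / (eps * x ^ (n - 1)) * Q)) with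
          (/ x ^ (n - 1) * Q ^ 2 / eps - p ^ n / INR n * Q / (eps * x ^ (n - 1))) by (field; lra).
        assert (/ x ^ (n - 1) * Q ^ 2 / eps <= BF * Rpower Rr (INR n - 1 - 1) * (S1 ^ n * Rr - V1 n u1 x) / eps).
        { unfold Rdiv. apply Rmult_le_compat_r; [left; apply Rinv_0_lt_compat; lra|auto]. }
        replace (INR n - 1 - 1) with (INR n - 2) in H0 by ring.
        replace (BF * Rpower Rr (INR n - 2) / eps * (S1 ^ n * Rr - V1 n u1 x)) with
          (BF * Rpower Rr (INR n - 2) * (S1 ^ n * Rr - V1 n u1 x) / eps) by (field; lra).
        lra. }
      assert (HpV : eps * (x ^ (n - 1) * V ^ 2) = V * (p ^ n / INR n - Q)) by (rewrite <- E; ring).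
      assert (Hpn : p ^ Init.Nat.pred n * p = p ^ n).
      { replace n with (S (Init.Nat.pred n)) at 2 by lia. simpl. ring. }
      assert (Hpn1 : Init.Nat.pred n = (n - 1)%nat) by lia.
      rewrite Hpn1 in Hpn.
      replace (eps * (x ^ (n - 1) * V ^ 2) + p ^ (n - 1) * v ^ 2)
        with (V * (p ^ n / INR n) - V * Q + p ^ (n - 1) * v ^ 2) by (rewrite HpV; ring).
      rewrite Hpn1.
      replace (v * (INR n * (v - (INR n - 1) / x * p) * p ^ (n - 1) / INR n))
        with (p ^ (n - 1) * v ^ 2 - (INR n - 1) * (/ x * p ^ n * v)) by (rewrite <- Hpn; field; lra).
      lra.
  - rewrite (v_R n Rr eps f u So), (v_R n Rr 1 f u1 So1).
    assert (Hva : 0 <= v_of n u1 a) by (apply (v_nonneg n Rr 1 f u1 So1 (rd_mono _ _ _ _ _ _ Rd) Hn HR ltac:(lra) Hf); lra).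
    assert (Hva' : v_of n u1 a <= INR n * S1) by (apply (rd_K3 _ _ _ _ _ _ Rd); lra).
    assert (Hv0 : 0 <= v_of n u a) by (apply (v_nonneg n Rr eps f u So Hm Hn HR He Hf); lra).
    assert (Hp0 : 0 <= D1 u a) by (apply (p_nonneg n Rr eps f u So Hm); lra).
    assert (0 <= v_of n u a * (/ INR n * D1 u a ^ n)) by (apply Rmult_le_pos; auto; apply Rmult_le_pos; [left; apply Rinv_0_lt_compat; lra|apply pow_le; lra]).
    assert (HpR : 0 <= D1 u Rr <= Pb) by (split; [apply (p_nonneg n Rr eps f u So Hm)|apply HPb]; lra).
    assert (D1 u Rr ^ n <= Pb ^ n) by (apply pow_incr; auto).
    assert (Hn1 : 1 <= INR n) by lra.
    assert (eps * (/ INR n * D1 u Rr ^ n) <= eps * Pb ^ n).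
    { apply Rmult_le_compat_l; [lra|]. unfold Rdiv. assert (0 <= D1 u Rr ^ n) by (apply pow_le; lra).
      assert (/ INR n <= 1) by (rewrite <- Rinv_1; apply Rinv_le_contravar; lra). nra. }
    assert (Hh7 : RInt (fun x => (INR n - 1) * h7b n u 1 x) a Rr <= (INR n - 1) * (INR n * B7 n Rr eps S1 BF 1)).
    { rewrite RInt_scal'; [|lra|intros; apply (c_h7b n Rr eps f u); auto; lra].
      apply Rmult_le_compat_l; [lra|].
      apply (h7b_int n Rr eps f u u1 S1 BF 1 So Hm Hn HR He Hf Rd HQe ltac:(lra) a Haa). }
    assert (HS : 0 <= S1 ^ n) by (apply pow_le, (rd_S1 _ _ _ _ _ _ Rd)).
    assert (C * (S1 ^ n * Rr) * (Rr - a) <= C * (S1 ^ n * Rr ^ 2)).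
    { rewrite Rmult_assoc. apply Rmult_le_compat_l; auto. simpl. rewrite Rmult_1_r.
      rewrite Rmult_assoc. apply Rmult_le_compat_l; auto. apply Rmult_le_compat_l; lra. }
    assert (C * v_of n u1 a <= C * (INR n * S1)) by (apply Rmult_le_compat_l; auto).
    fold C. nra.
Qed.

Definition h9a (u : R -> R) alpha x := Rpower x (2 - alpha) * Rabs (V1 2 u x) ^ 2.
Definition h9b (u : R -> R) alpha x := Rpower x (1 - alpha) * D1 u x * Rabs (v_of 2 u x) ^ 2.

Lemma ix_bound Rr eps f u u1 S1 BF Pb alpha :
  SolF 2 Rr eps f u -> mono_incr_on Rr u -> 0 < Rr -> 0 < eps ->
  (forall r, 0 < r < Rr -> 0 <= f r) -> RefD 2 Rr f u1 S1 BF ->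
  (forall x, 0 < x <= Rr -> Qf 2 eps u x = Qf 2 1 u1 x) ->
  (forall x, 0 <= x <= Rr -> D1 u x <= Pb) -> alpha < 1 ->
  forall a, 0 < a < Rr ->
  eps * RInt (h9a u alpha) a Rr + RInt (h9b u alpha) a Rr <=
    eps * Rpower Rr (1 - alpha) * Pb ^ 2 + INR 2 * B7 2 Rr eps S1 BF alpha
    + BF * Rpower Rr (1 - alpha) / eps * (S1 ^ 2 * Rr ^ 2 + INR 2 * S1).
Proof.
  intros So Hm HR He Hf Rd HQe HPb Ha a Haa.
  assert (Hn : (2 <= 2)%nat) by lia.
  assert (Ha' : alpha < INR 2 - 1) by (simpl; lra).
  pose proof (rd_sol _ _ _ _ _ _ Rd) as So1.
  set (C := BF * Rpower Rr (1 - alpha) / eps).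
  assert (HC : 0 <= C) by (unfold C; apply Rdiv_le_0_compat; [apply Rmult_le_pos; [apply (rd_BF _ _ _ _ _ _ Rd)|left; apply Rpower_pos]|lra]).
  assert (Hc9a : forall x, a <= x <= Rr -> continuity_pt (h9a u alpha) x).
  { intros x Hx. unfold h9a. apply cpt_mult; [apply cpt_Rpower; [apply cpt_id|lra]|apply cpt_pow, cpt_abs, (c_V1 2 Rr eps f u x So); lra]. }
  assert (Hc9b : forall x, a <= x <= Rr -> continuity_pt (h9b u alpha) x).
  { intros x Hx. unfold h9b. apply cpt_mult; [apply cpt_mult; [apply cpt_Rpower; [apply cpt_id|lra]|apply (c_p 2 Rr eps f u x So); lra]|apply cpt_pow, cpt_abs, (c_v 2 Rr eps f u x So); lra]. }
  rewrite <- (Rmult_1_l (RInt (h9b u alpha) a Rr)).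
  rewrite <- RInt_lin2; [|lra|auto|auto].
  eapply Rle_trans.
  - apply (int_antider2 _ (h7b 2 u alpha)
      (fun x => Rpower x (1 - alpha) * (v_of 2 u x * (/ 2 * D1 u x ^ 2)) - C * v_of 2 u1 x)
      (fun x => (1 - alpha) * Rpower x (1 - alpha - 1) * (v_of 2 u x * (/ 2 * D1 u x ^ 2))
                + Rpower x (1 - alpha) * (V1 2 u x * (/ 2 * D1 u x ^ 2) + v_of 2 u x * (/ 2 * (INR 2 * D2 u x * D1 u x ^ Init.Nat.pred 2)))
                - C * V1 2 u1 x)
      (C * (S1 ^ 2 * Rr)) a Rr); [lra| | | | |].
    + intros x Hx.
      pose proof (is_derive_Rpower x (1 - alpha) ltac:(lra)) as H0.
      pose proof (d_v 2 Rr eps f u x So ltac:(lra)) as H1.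
      pose proof (is_derive_pow (D1 u) 2 x _ (is_derive_D2 2 Rr eps f u x So ltac:(lra))) as H2.
      pose proof (is_derive_scal _ x (/ 2) _ H2) as H2'.
      pose proof (is_derive_mult _ _ _ _ _ H1 H2' ltac:(intros; apply Rmult_comm)) as H3.
      pose proof (is_derive_mult _ _ _ _ _ H0 H3 ltac:(intros; apply Rmult_comm)) as H4.
      pose proof (is_derive_scal _ x C _ (d_v 2 Rr 1 f u1 x So1 ltac:(lra))) as H5.
      pose proof (is_derive_minus _ _ _ _ _ H4 H5) as H6.
      refine (is_derive_eq _ _ _ _ H6 _). unfold scal, plus, mult, minus, opp; simpl; unfold mult, plus, opp; simpl. ring.
    + intros x Hx. pose proof (c_V1 2 Rr eps f u x So ltac:(lra)). pose proof (c_v 2 Rr eps f u x So ltac:(lra)).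
      pose proof (c_p 2 Rr eps f u x So ltac:(lra)). pose proof (sf_c2 _ _ _ _ _ So x ltac:(lra)).
      pose proof (c_V1 2 Rr 1 f u1 x So1 ltac:(lra)).
      assert (continuity_pt (fun y => Rpower y (1 - alpha)) x) by (apply cpt_Rpower; [apply cpt_id|lra]).
      assert (continuity_pt (fun y => Rpower y (1 - alpha - 1)) x) by (apply cpt_Rpower; [apply cpt_id|lra]).
      apply cpt_minus; [|apply cpt_mult; [apply cpt_const|auto]].
      apply cpt_plus; apply cpt_mult; try (apply cpt_mult; [apply cpt_const|auto]); auto.
      * apply cpt_mult; auto. apply cpt_mult; [apply cpt_const|apply cpt_pow; auto].
      * apply cpt_plus; apply cpt_mult; auto; apply cpt_mult; try apply cpt_const; try (apply cpt_pow; auto).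
        apply cpt_mult; [apply cpt_mult; [apply cpt_const|auto]|apply cpt_pow; auto].
    + intros x Hx. apply cpt_plus; apply cpt_mult; try apply cpt_const; auto.
    + intros x Hx. apply (c_h7b 2 Rr eps f u); auto; lra.
    + intros x Hx. unfold h9a, h9b, h7b.
      set (v := v_of 2 u x). set (p := D1 u x). set (V := V1 2 u x). set (Q := Qf 2 eps u x).
      pose proof (QV 2 eps u x) as E. fold V p Q in E.
      assert (HQ0 : 0 <= Q) by (apply (Q_nonneg 2 Rr eps f u So Hn HR He Hf); lra).
      assert (HK := kbound 2 Rr eps u u1 S1 BF alpha x Hn HR Ha' ltac:(lra) HQ0 (HQe x ltac:(lra))
              (rd_K1 _ _ _ _ _ _ Rd x ltac:(lra)) (rd_K2 _ _ _ _ _ _ Rd x ltac:(lra))).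
      fold Q in HK.
      assert (Hv0 : 0 <= v) by (apply (v_nonneg 2 Rr eps f u So Hm Hn HR He Hf); lra).
      assert (Hp0 : 0 <= p) by (apply (p_nonneg 2 Rr eps f u So Hm); lra).
      set (A := Rpower x (- alpha)).
      assert (HA : 0 < A) by apply Rpower_pos.
      assert (R1 : Rpower x (1 - alpha) = A * x).
      { unfold A. replace (1 - alpha) with (- alpha + 1) by ring. rewrite Rpower_plus, Rpower_1 by lra. ring. }
      assert (R2 : Rpower x (2 - alpha) = A * x * x).
      { unfold A. replace (2 - alpha) with (- alpha + 1 + 1) by ring. rewrite !Rpower_plus, Rpower_1 by lra. ring. }
      assert (R3 : Rpower x (1 - alpha - 1) = A) by (unfold A; f_equal; ring).
      assert (R4 : Rpower x (2 - INR 2 - alpha) = A) by (unfold A; f_equal; simpl; ring).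
      assert (R5 : Rpower Rr (INR 2 - 1 - alpha) = Rpower Rr (1 - alpha)) by (f_equal; simpl; ring).
      rewrite R4, R5 in HK.
      rewrite R1, R2, R3. rewrite !pow2_abs.
      assert (Hq : D2 u x = v - (INR 2 - 1) / x * p) by (unfold v, v_of; fold p; ring).
      rewrite Hq.
      simpl (Init.Nat.pred 2). simpl (2 - 1)%nat in E.
      replace (INR 2) with 2 in * by (simpl; ring).
      assert (HV : V = (p ^ 2 / 2 - Q) / (eps * x)).
      { rewrite <- E. field. split; lra. }
      assert (HAVQ : - (A * x * V * Q) <= C * (S1 ^ 2 * Rr - V1 2 u1 x)).
      { rewrite HV. unfold C.
        replace (- (A * x * ((p ^ 2 / 2 - Q) / (eps * x)) * Q)) with
          (A * Q ^ 2 / eps - A * (p ^ 2 / 2) * Q / eps) by (field; lra).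
        assert (0 <= A * (p ^ 2 / 2) * Q / eps).
        { apply Rdiv_le_0_compat; [|lra]. apply Rmult_le_pos; [apply Rmult_le_pos|]; try lra. 
          apply Rdiv_le_0_compat; [apply pow2_ge_0|lra]. }
        assert (A * Q ^ 2 / eps <= BF * Rpower Rr (1 - alpha) * (S1 ^ 2 * Rr - V1 2 u1 x) / eps).
        { unfold Rdiv. apply Rmult_le_compat_r; [left; apply Rinv_0_lt_compat; lra|auto]. }
        replace (BF * Rpower Rr (1 - alpha) / eps * (S1 ^ 2 * Rr - V1 2 u1 x)) with
          (BF * Rpower Rr (1 - alpha) * (S1 ^ 2 * Rr - V1 2 u1 x) / eps) by (field; lra).
        lra. }
      assert (Hb : (1 + alpha) / 2 * (A * p ^ 2 * v) <= A * p ^ 2 * v).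
      { assert (0 <= A * p ^ 2 * v) by (apply Rmult_le_pos; [apply Rmult_le_pos; [lra|apply pow2_ge_0]|lra]).
        nra. }
      assert (HepsV : eps * (A * x * x * V ^ 2) = A * x * V * (p ^ 2 / 2 - Q)).
      { rewrite <- E. ring. }
      replace (A * x * p * v ^ 2) with (A * x * p * v ^ 2) by ring.
      assert (Heq : eps * (A * x * x * V ^ 2) + A * x * p * v ^ 2 =
        ((1 - alpha) * A * (v * (/ 2 * p ^ 2)) +
         A * x * (V * (/ 2 * p ^ 2) + v * (/ 2 * (2 * (v - (2 - 1) / x * p) * p ^ 1))))
        + (1 + alpha) / 2 * (A * p ^ 2 * v) - A * x * V * Q).
      { rewrite HepsV. field. lra. }
      rewrite Rmult_1_l, Heq. lra.
  - rewrite (v_R 2 Rr eps f u So), (v_R 2 Rr 1 f u1 So1).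
    assert (Hva : 0 <= v_of 2 u1 a) by (apply (v_nonneg 2 Rr 1 f u1 So1 (rd_mono _ _ _ _ _ _ Rd) Hn HR ltac:(lra) Hf); lra).
    assert (Hva' : v_of 2 u1 a <= INR 2 * S1) by (apply (rd_K3 _ _ _ _ _ _ Rd); lra).
    assert (Hv0 : 0 <= v_of 2 u a) by (apply (v_nonneg 2 Rr eps f u So Hm Hn HR He Hf); lra).
    assert (0 <= Rpower a (1 - alpha) * (v_of 2 u a * (/ 2 * D1 u a ^ 2))).
    { apply Rmult_le_pos; [left; apply Rpower_pos|]. apply Rmult_le_pos; auto.
      apply Rmult_le_pos; [lra|apply pow2_ge_0]. }
    assert (HpR : 0 <= D1 u Rr <= Pb) by (split; [apply (p_nonneg 2 Rr eps f u So Hm)|apply HPb]; lra).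
    assert (D1 u Rr ^ 2 <= Pb ^ 2) by (apply pow_incr; auto).
    assert (Rpower Rr (1 - alpha) * (eps * (/ 2 * D1 u Rr ^ 2)) <= eps * Rpower Rr (1 - alpha) * Pb ^ 2).
    { assert (0 < Rpower Rr (1 - alpha)) by apply Rpower_pos. assert (0 <= D1 u Rr ^ 2) by apply pow2_ge_0.
      replace (Rpower Rr (1 - alpha) * (eps * (/ 2 * D1 u Rr ^ 2))) with ((eps * Rpower Rr (1 - alpha)) * (/ 2 * D1 u Rr ^ 2)) by ring.
      apply Rmult_le_compat_l; [nra|lra]. }
    assert (Hh7 : RInt (h7b 2 u alpha) a Rr <= INR 2 * B7 2 Rr eps S1 BF alpha)
      by (apply (h7b_int 2 Rr eps f u u1 S1 BF alpha So Hm Hn HR He Hf Rd HQe Ha' a Haa)).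
    assert (HS : 0 <= S1 ^ 2) by apply pow2_ge_0.
    assert (C * (S1 ^ 2 * Rr) * (Rr - a) <= C * (S1 ^ 2 * Rr ^ 2)).
    { assert (S1 ^ 2 * Rr * (Rr - a) <= S1 ^ 2 * Rr * Rr) by (apply Rmult_le_compat_l; [apply Rmult_le_pos; lra|lra]).
      replace (Rr ^ 2) with (Rr * Rr) by ring. rewrite Rmult_assoc.
      apply Rmult_le_compat_l; auto. lra. }
    assert (C * v_of 2 u1 a <= C * (INR 2 * S1)) by (apply Rmult_le_compat_l; auto).
    fold C. nra.
Qed.

Lemma gen_ext (h g : R -> R) Rr I : 0 < Rr -> (forall x, 0 < x < Rr -> h x = g x) ->
  is_RInt_gen h (at_right 0) (at_left Rr) I -> is_RInt_gen g (at_right 0) (at_left Rr) I.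
Proof.
  intros HR He H. apply (is_RInt_gen_ext h); auto.
  apply Filter_prod with (fun a => 0 < a < Rr) (fun b => 0 < b < Rr).
  - exists (mkposreal Rr HR). intros y Hy Hy0. bR Hy. apply Rabs_lt_between in Hy. lra.
  - exists (mkposreal Rr HR). intros y Hy Hy0. bR Hy. apply Rabs_lt_between in Hy. lra.
  - intros a b Ha Hb x Hx. simpl in Hx. apply He.
    pose proof (Rmin_l a b). pose proof (Rmin_r a b). pose proof (Rmax_l a b). pose proof (Rmax_r a b).
    destruct (Rle_dec a b) as [Hab|Hab].
    + rewrite Rmin_left, Rmax_right in Hx by lra. lra.
    + rewrite Rmin_right, Rmax_left in Hx by lra. lra.
Qed.

Lemma improper_le (h : R -> R) Rr B I :
  (forall a, 0 < a < Rr -> RInt h a Rr <= B) ->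
  (forall e, 0 < e -> exists a0, 0 < a0 < Rr /\ forall a, 0 < a <= a0 -> I - e <= RInt h a Rr) ->
  I <= B.
Proof.
  intros HB Ha. apply Rle_plus_epsilon. intros e He.
  destruct (Ha e He) as [a0 [Ha0 Ha0']]. specialize (Ha0' a0 ltac:(lra)). specialize (HB a0 Ha0). lra.
Qed.

Lemma eps_pow_le eps k : 0 < eps < 1 -> eps ^ k <= / eps.
Proof.
  intros He. apply Rle_trans with 1.
  - apply pow_le1; lra.
  - rewrite <- Rinv_1. apply Rinv_le_contravar; lra.
Qed.

Lemma u_bound n Rr eps f u gR Pb : SolF n Rr eps f u -> mono_incr_on Rr u -> 0 < Rr -> u Rr = gR ->
  (forall x, 0 <= x <= Rr -> D1 u x <= Pb) ->
  forall x, 0 <= x <= Rr -> Rabs (u x) <= Rabs gR + Rr * Pb.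
Proof.
  intros So Hm HR HuR HPb x Hx.
  destruct (Req_dec x Rr) as [->|Hne].
  { rewrite HuR. assert (0 <= Pb) by (apply Rle_trans with (D1 u Rr); [apply (p_nonneg n Rr eps f u So Hm)|apply HPb]; lra).
    assert (0 <= Rr * Pb) by nra. lra. }
  destruct (MVT_cor2 u (D1 u) x Rr) as [xi [Hxi1 Hxi2]]; [lra| |].
  { intros c Hc. apply is_derive_Reals. apply (is_derive_D1 n Rr eps f u c So). lra. }
  assert (0 <= D1 u xi <= Pb) by (split; [apply (p_nonneg n Rr eps f u So Hm)|apply HPb]; lra).
  assert (0 <= D1 u xi * (Rr - x) <= Pb * Rr) by (split; [apply Rmult_le_pos|apply Rmult_le_compat]; lra).
  rewrite HuR in Hxi1.
  assert (u x = gR - D1 u xi * (Rr - x)) by lra.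
  rewrite H1. eapply Rle_trans; [apply Rabs_triang|]. rewrite Rabs_Ropp, (Rabs_pos_eq (D1 u xi * (Rr - x))) by lra. lra.
Qed.

Definition B7c n Rr S1 BF alpha :=
  Rpower Rr (INR n - 1 - alpha) / 2 +
  BF * Rpower Rr (INR n - 1 - alpha) / (INR n - 1 - alpha) * (S1 ^ n * Rr ^ 2 + INR n * S1).

Lemma B7c_nonneg n Rr S1 BF alpha : 0 <= S1 -> 0 <= BF -> alpha < INR n - 1 -> 0 <= B7c n Rr S1 BF alpha.
Proof.
  intros HS HB Ha. unfold B7c.
  assert (0 < Rpower Rr (INR n - 1 - alpha)) by apply Rpower_pos.
  assert (0 <= S1 ^ n * Rr ^ 2 + INR n * S1).
  { apply Rplus_le_le_0_compat; [apply Rmult_le_pos; [apply pow_le; auto|apply pow2_ge_0]|apply Rmult_le_pos; [apply pos_INR|auto]]. }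
  apply Rplus_le_le_0_compat; [lra|]. apply Rmult_le_pos; auto.
  apply Rdiv_le_0_compat; [apply Rmult_le_pos; lra|lra].
Qed.

Lemma B7_le n Rr eps S1 BF alpha : 0 < eps < 1 -> 0 <= S1 -> 0 <= BF -> alpha < INR n - 1 ->
  B7 n Rr eps S1 BF alpha <= B7c n Rr S1 BF alpha / eps.
Proof.
  intros He HS HB Ha. unfold B7, B7c.
  set (X := Rpower Rr (INR n - 1 - alpha)). set (b := INR n - 1 - alpha). set (Y := S1 ^ n * Rr ^ 2 + INR n * S1).
  assert (HX : 0 < X) by apply Rpower_pos.
  assert (Hb : 0 < b) by (unfold b; lra).
  assert (HY : 0 <= Y).
  { apply Rplus_le_le_0_compat; [apply Rmult_le_pos; [apply pow_le; auto|apply pow2_ge_0]|apply Rmult_le_pos; [apply pos_INR|auto]]. }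
  assert (He3 : eps ^ 3 <= / eps) by (apply eps_pow_le; lra).
  assert (eps ^ 3 * X / 2 <= X / 2 / eps).
  { unfold Rdiv. replace (X * / 2 * / eps) with (/ eps * (X * / 2)) by ring.
    rewrite Rmult_assoc. apply Rmult_le_compat_r; lra. }
  assert (BF * X / (eps * b) * Y = BF * X / b * Y / eps) by (field; lra).
  replace ((X / 2 + BF * X / b * Y) / eps) with (X / 2 / eps + BF * X / b * Y / eps) by (field; lra).
  lra.
Qed.

Lemma pow_conv n Rr r0 x : 0 < r0 <= x -> x <= Rr ->
  / x ^ (n - 1) <= (1 + Rr) ^ ((n - 1) * (n - 2)) / r0 ^ ((n - 1) * (n - 1)).
Proof.
  intros Hr Hx.
  assert (H1 : 0 < r0 ^ (n - 1)) by (apply pow_lt; lra).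
  assert (H2 : r0 ^ (n - 1) <= x ^ (n - 1)) by (apply pow_incr; lra).
  assert (H3 : 0 < r0 ^ ((n - 1) * (n - 2))) by (apply pow_lt; lra).
  assert (H4 : r0 ^ ((n - 1) * (n - 2)) <= (1 + Rr) ^ ((n - 1) * (n - 2))) by (apply pow_incr; lra).
  destruct (Compare_dec.le_lt_dec n 1) as [Hn|Hn].
  - replace ((n - 1) * (n - 2))%nat with 0%nat by lia. replace ((n - 1) * (n - 1))%nat with 0%nat by lia.
    replace (n - 1)%nat with 0%nat by lia. simpl. lra.
  - assert (E : r0 ^ ((n - 1) * (n - 1)) = r0 ^ (n - 1) * r0 ^ ((n - 1) * (n - 2))).
    { rewrite <- pow_add. f_equal. destruct n as [|[|k]]; [lia|lia|]. simpl. lia. }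
    rewrite E.
    apply Rle_trans with (/ r0 ^ (n - 1)).
    + apply Rinv_le_contravar; lra.
    + unfold Rdiv. rewrite Rinv_mult.
      replace (/ r0 ^ (n - 1)) with (/ r0 ^ (n - 1) * (r0 ^ ((n - 1) * (n - 2)) * / r0 ^ ((n - 1) * (n - 2)))) at 1
        by (rewrite Rinv_r; lra).
      assert (0 < / r0 ^ (n - 1)) by (apply Rinv_0_lt_compat; lra).
      assert (0 < / r0 ^ ((n - 1) * (n - 2))) by (apply Rinv_0_lt_compat; lra).
      replace ((1 + Rr) ^ ((n - 1) * (n - 2)) * (/ r0 ^ (n - 1) * / r0 ^ ((n - 1) * (n - 2))))
        with (/ r0 ^ (n - 1) * ((1 + Rr) ^ ((n - 1) * (n - 2)) * / r0 ^ ((n - 1) * (n - 2)))) by ring.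
      apply Rmult_le_compat_l; [lra|]. apply Rmult_le_compat_r; lra.
Qed.

Lemma RInt_const_bound (h : R -> R) a b B : a <= b -> (forall x, a <= x <= b -> continuity_pt h x) ->
  (forall x, a <= x <= b -> Rabs (h x) <= B) -> RInt h a b <= (b - a) * B.
Proof.
  intros Hab Hc Hb.
  pose proof (abs_RInt_le_const h a b B Hab (exRI_ab h a b Hab Hc) Hb).
  pose proof (Rle_abs (RInt h a b)). lra.
Qed.

Lemma RInt_nonneg (h : R -> R) a b : a <= b -> (forall x, a <= x <= b -> continuity_pt h x) ->
  (forall x, a < x < b -> 0 <= h x) -> 0 <= RInt h a b.
Proof. intros Hab Hc Hp. apply RInt_ge_0; auto. apply exRI_ab; auto. Qed.

Theorem theorem3p11
  (n : nat) (Rr gR : R) (f : R -> R) (u : R -> R -> R)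
  (Hn : (2 <= n)%nat) (HR : 0 < Rr)
  (Hfc : forall r, 0 < r < Rr -> continuous f r)
  (Hfpos : forall r, 0 < r < Rr -> 0 <= f r)
  (Hfnz : exists r, 0 < r < Rr /\ f r <> 0)
  (Hsol : forall eps, 0 < eps ->
     classical_solution n Rr gR eps f (u eps) /\ mono_incr_on Rr (u eps)) :
  exists eps0 : R, 0 < eps0 /\
  exists C0 C1 C2 C3 C4 C5 C7 : R,
    0 < C0 /\ 0 < C1 /\ 0 < C2 /\ 0 < C3 /\ 0 < C4 /\ 0 < C5 /\ 0 < C7 /\
    (forall eps, 0 < eps < eps0 ->
      (* (i) *)
      (exists I, integral_eq (fun r => Rabs (Derive (u eps) r) ^ n) 0 Rr I /\
         forall x, 0 <= x <= Rr -> Rabs (u eps x) + I <= C0) /\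
      (* (ii) *)
      (forall x y z, 0 <= x <= Rr -> 0 <= y <= Rr -> 0 <= z <= Rr ->
         Rabs (u eps x) + Rabs (Derive (u eps) y) + Rabs (w_of n (u eps) z) <= C1) /\
      (* (iii) *)
      (forall x, 0 <= x <= Rr -> Rabs (Derive (w_of n (u eps)) x) <= C2 / eps) /\
      (* (iv) *)
      (forall r0, 0 < r0 <= Rr -> forall x, r0 <= x <= Rr ->
         Rabs (v_of n (u eps) x) <= C3 / (eps * r0 ^ (n - 1))) /\
      (* (v) *)
      (forall r0, 0 < r0 <= Rr -> forall x, r0 <= x <= Rr ->
         Rabs (Derive (v_of n (u eps)) x) <= C4 / (eps * r0 ^ ((n - 1) * (n - 1)))) /\
      (* (vi) *)
      (exists I1 I2,
         integral_eq (fun r => Rabs (Derive (w_of n (u eps)) r) ^ 2) 0 Rr I1 /\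
         integral_eq (fun r => r ^ (2 * (n - 1)) * Rabs (v_of n (u eps) r) ^ 2) 0 Rr I2 /\
         I1 + I2 <= C5 / eps) /\
      (* (viii) *)
      ((3 <= n)%nat ->
        exists I1 I2,
         integral_eq (fun r => r ^ (n - 1) * Rabs (Derive (v_of n (u eps)) r) ^ 2) 0 Rr I1 /\
         integral_eq (fun r => Derive (u eps) r ^ (n - 1) * Rabs (v_of n (u eps) r) ^ 2) 0 Rr I2 /\
         eps * I1 + I2 <= C7 / eps)) /\
    (* (vii) *)
    (forall alpha, alpha < INR n - 1 ->
      exists C6, 0 < C6 /\
      forall eps, 0 < eps < eps0 ->
        exists I1 I2,
         integral_eq (fun r => Rpower r (INR n - 2 - alpha) * Rabs (v_of n (u eps) r) ^ 2) 0 Rr I1 /\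
         integral_eq (fun r => Rpower r (- alpha) * Derive (u eps) r ^ n * v_of n (u eps) r) 0 Rr I2 /\
         eps * I1 + I2 <= C6 / eps) /\
    (* (ix) *)
    (n = 2%nat -> forall alpha, alpha < 1 ->
      exists C8, 0 < C8 /\
      forall eps, 0 < eps < eps0 ->
        exists I1 I2,
         integral_eq (fun r => Rpower r (2 - alpha) * Rabs (Derive (v_of n (u eps)) r) ^ 2) 0 Rr I1 /\
         integral_eq (fun r => Rpower r (1 - alpha) * Derive (u eps) r * Rabs (v_of n (u eps) r) ^ 2) 0 Rr I2 /\
         eps * I1 + I2 <= C8 / eps).
Proof.
  assert (Sol : forall eps, 0 < eps -> SolF n Rr eps f (u eps)).
  { intros eps He. apply (solF n Rr gR). apply Hsol; auto. }
  assert (Mono : forall eps, 0 < eps -> mono_incr_on Rr (u eps)).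
  { intros eps He. apply Hsol; auto. }
  assert (HuR : forall eps, 0 < eps -> u eps Rr = gR).
  { intros eps He. destruct (Hsol eps He) as [[_ [_ [_ [_ [H _]]]]] _]. exact H. }
  set (Hf := Hfpos).
  set (u1 := u 1).
  assert (So1 : SolF n Rr 1 f u1) by (apply Sol; lra).
  assert (Mo1 : mono_incr_on Rr u1) by (apply Mono; lra).
  set (M := Qf n 1 u1 Rr).
  assert (HQe : forall eps, 0 < eps -> forall x, 0 < x <= Rr -> Qf n eps (u eps) x = Qf n 1 u1 x).
  { intros eps He x Hx. apply (Q_eq n Rr eps 1 f (u eps) u1 (Sol eps He) So1 Hn HR He ltac:(lra) x Hx). }
  assert (HM : 0 <= M) by (apply (Q_nonneg n Rr 1 f u1 So1 Hn HR ltac:(lra) Hf); lra).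
  assert (HQR : forall eps, 0 < eps -> Qf n eps (u eps) Rr = M).
  { intros eps He. apply HQe; auto; lra. }
  destruct (ref_data n Rr f u1 So1 Mo1 Hn HR Hf) as [S1 [BF [HS1 [HBF [K1 [K2 K3]]]]]].
  assert (Rd : RefD n Rr f u1 S1 BF) by (constructor; auto).
  set (Pb := 1 + INR n * M + Rr).
  assert (Hn0 : 0 < INR n) by (apply lt_0_INR; lia).
  assert (HnR : 1 <= INR n - 1) by (assert (2 <= INR n) by (apply (le_INR 2); lia); lra).
  assert (HPb0 : 1 <= Pb) by (unfold Pb; assert (0 <= INR n * M) by nra; lra).
  assert (HPb : forall eps, 0 < eps < 1 -> forall x, 0 <= x <= Rr -> D1 (u eps) x <= Pb).
  { intros eps He x Hx. pose proof (p_bound n Rr eps f (u eps) (Sol eps ltac:(lra)) (Mono eps ltac:(lra)) Hn HR ltac:(lra) Hf x Hx).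
    rewrite HQR in H by lra. unfold Pb. assert (eps * Rr <= Rr) by nra. lra. }

  set (Y1 := S1 ^ n * Rr ^ 2 + INR n * S1).
  assert (HY1 : 0 <= Y1).
  { apply Rplus_le_le_0_compat; [apply Rmult_le_pos; [apply pow_le; auto|apply pow2_ge_0]|apply Rmult_le_pos; lra]. }
  assert (HRn : 0 < Rr ^ (n - 1)) by (apply pow_lt; lra).
  assert (HPbn : 0 < Pb ^ n) by (apply pow_lt; lra).
  exists 1. split; [lra|].
  exists (Rabs gR + Rr * Pb + Rr * Pb ^ n + 1), (Rabs gR + Rr * Pb + Pb + Rr ^ (n - 1) * Pb + 1),
    (Rr ^ (n - 1) + M * Rr + 1), (Rr ^ (n - 1) + M * Rr + 1),
    ((Pb ^ n + M + 1) * (1 + Rr) ^ ((n - 1) * (n - 2))),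
    (2 * (Rr ^ (n - 1) * (Rr ^ (n - 1) * Pb) + Rr ^ (n - 1) * M * Pb * Rr) + 1),
    (Pb ^ n + (INR n - 1) * (INR n * Rabs (B7c n Rr S1 BF 1)) + BF * Rpower Rr (INR n - 2) * Y1 + 1).
  assert (HgR := Rabs_pos gR).
  assert (HK : 0 < (1 + Rr) ^ ((n - 1) * (n - 2))) by (apply pow_lt; lra).
  assert (HB7a := Rabs_pos (B7c n Rr S1 BF 1)).
  assert (HBFR : 0 <= BF * Rpower Rr (INR n - 2) * Y1) by (apply Rmult_le_pos; [apply Rmult_le_pos; [auto|left; apply Rpower_pos]|auto]).
  split; [nra|]. split; [nra|]. split; [nra|]. split; [nra|]. split; [apply Rmult_lt_0_compat; nra|].
  split.
  { assert (0 <= Rr ^ (n - 1) * (Rr ^ (n - 1) * Pb)) by (apply Rmult_le_pos; [lra|nra]).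
    assert (0 <= Rr ^ (n - 1) * M * Pb * Rr) by (apply Rmult_le_pos; [apply Rmult_le_pos; [apply Rmult_le_pos|]|]; lra). lra. }
  split.
  { assert (0 <= (INR n - 1) * (INR n * Rabs (B7c n Rr S1 BF 1))) by (apply Rmult_le_pos; [lra|apply Rmult_le_pos; lra]). lra. }
  split; [|split].
  -
    intros eps Heps.
    assert (He : 0 < eps) by lra.
    pose proof (Sol eps He) as So. pose proof (Mono eps He) as Mo.
    pose proof (HPb eps Heps) as HPbe.
    pose proof (HQR eps He) as HQRe. pose proof (HQe eps He) as HQee. pose proof (HuR eps He) as HuRe.
    set (ue := u eps) in *.
    assert (Hpe : forall x, 0 <= x <= Rr -> 0 <= D1 ue x <= Pb).
    { intros x Hx. split; [apply (p_nonneg n Rr eps f ue So Mo); auto|apply HPbe; auto]. }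
    assert (Hve : forall x, 0 < x <= Rr -> 0 <= v_of n ue x) by (apply (v_nonneg n Rr eps f ue So Mo Hn HR He Hf)).
    assert (Hueb : forall x, 0 <= x <= Rr -> Rabs (ue x) <= Rabs gR + Rr * Pb).
    { apply (u_bound n Rr eps f ue gR Pb So Mo HR HuRe HPbe). }
    assert (Hinv : eps <= / eps).
    { apply Rmult_le_reg_l with eps; auto. rewrite Rinv_r by lra. nra. }
    split; [|split; [|split; [|split; [|split; [|split]]]]].
    +
      destruct (improper (fun r => Rabs (D1 ue r) ^ n) Rr (Rr * Pb ^ n) HR) as [I [HI [HIup HIapp]]].
      * intros x Hx. apply cpt_pow, cpt_abs, (c_p n Rr eps f ue x So); lra.
      * intros x Hx. apply pow_le, Rabs_pos.
      * intros a Ha. apply Rle_trans with ((Rr - a) * Pb ^ n); [apply RInt_const_bound|].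
        -- lra.
        -- intros x Hx. apply cpt_pow, cpt_abs, (c_p n Rr eps f ue x So); lra.
        -- intros x Hx. rewrite Rabs_pos_eq by (apply pow_le, Rabs_pos).
           apply pow_incr. split; [apply Rabs_pos|]. pose proof (Hpe x ltac:(lra)). rewrite Rabs_pos_eq; lra.
        -- apply Rmult_le_compat_r; lra.
      * exists I. split; [exact HI|].
        intros x Hx. assert (I <= Rr * Pb ^ n).
        { apply (improper_le (fun r => Rabs (D1 ue r) ^ n) Rr _ I); auto.
          intros a Ha. apply Rle_trans with ((Rr - a) * Pb ^ n); [apply RInt_const_bound|].
          -- lra.
          -- intros y Hy. apply cpt_pow, cpt_abs, (c_p n Rr eps f ue y So); lra.
          -- intros y Hy. rewrite Rabs_pos_eq by (apply pow_le, Rabs_pos).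
             apply pow_incr. split; [apply Rabs_pos|]. pose proof (Hpe y ltac:(lra)). rewrite Rabs_pos_eq; lra.
          -- apply Rmult_le_compat_r; lra. }
        specialize (Hueb x Hx). lra.
    +
      intros x y z Hx Hy Hz.
      specialize (Hueb x Hx).
      pose proof (Hpe y Hy). pose proof (Hpe z Hz).
      rewrite (Rabs_pos_eq (D1 ue y)) by lra.
      rewrite w_val, (Rabs_pos_eq (z ^ (n - 1) * D1 ue z)) by (apply Rmult_le_pos; [apply pow_le; lra|lra]).
      assert (z ^ (n - 1) * D1 ue z <= Rr ^ (n - 1) * Pb).
      { apply Rmult_le_compat; [apply pow_le; lra|lra|apply pow_incr; lra|lra]. }
      lra.
    +
      intros x Hx. rewrite (is_derive_unique _ _ _ (d_w n Rr eps f ue x So Hn Hx)).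
      destruct (Req_dec x 0) as [->|Hx0].
      * unfold W1. rewrite (sf_p0 _ _ _ _ _ So). rewrite (pow_i (n - 1)) by lia.
        replace (INR (n - 1) * 0 ^ (n - 1 - 1) * 0 + 0 * D2 ue 0) with 0 by ring.
        rewrite Rabs_R0. apply Rdiv_le_0_compat; [nra|lra].
      * rewrite W1_eq by (auto; lra).
        assert (Hxp : 0 < x) by lra.
        assert (Hxn : 0 < x ^ (n - 1)) by (apply pow_lt; lra).
        assert (Hv := Hve x ltac:(lra)).
        rewrite Rabs_pos_eq by (apply Rmult_le_pos; lra).
        pose proof (v_upper n Rr eps f ue So Mo Hn HR He Hf x ltac:(lra)) as Hvu. rewrite HQRe in Hvu.
        assert (x ^ (n - 1) * v_of n ue x <= eps * x ^ (n - 1) + M * (Rr - x) / eps).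
        { apply Rle_trans with (x ^ (n - 1) * (eps + M * (Rr - x) / (eps * x ^ (n - 1)))).
          - apply Rmult_le_compat_l; lra.
          - right. field. split; lra. }
        assert (eps * x ^ (n - 1) <= Rr ^ (n - 1) / eps).
        { assert (x ^ (n - 1) <= Rr ^ (n - 1)) by (apply pow_incr; lra).
          apply Rle_trans with (/ eps * Rr ^ (n - 1)); [apply Rmult_le_compat; lra|].
          unfold Rdiv; lra. }
        assert (M * (Rr - x) / eps <= M * Rr / eps).
        { unfold Rdiv. apply Rmult_le_compat_r; [left; apply Rinv_0_lt_compat; lra|]. apply Rmult_le_compat_l; lra. }
        assert (Rr ^ (n - 1) / eps + M * Rr / eps <= (Rr ^ (n - 1) + M * Rr + 1) / eps).
        { unfold Rdiv. assert (0 < / eps) by (apply Rinv_0_lt_compat; lra). nra. }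
        lra.
    +
      intros r0 Hr0 x Hx.
      assert (Hv := Hve x ltac:(lra)). rewrite Rabs_pos_eq by auto.
      pose proof (v_upper n Rr eps f ue So Mo Hn HR He Hf x ltac:(lra)) as Hvu. rewrite HQRe in Hvu.
      assert (Hr0n : 0 < r0 ^ (n - 1)) by (apply pow_lt; lra).
      assert (Hxr : r0 ^ (n - 1) <= x ^ (n - 1)) by (apply pow_incr; lra).
      assert (HrR : r0 ^ (n - 1) <= Rr ^ (n - 1)) by (apply pow_incr; lra).
      assert (Hep : 0 < eps * r0 ^ (n - 1)) by nra.
      assert (T1 : eps <= Rr ^ (n - 1) / (eps * r0 ^ (n - 1))).
      { apply Rmult_le_reg_r with (eps * r0 ^ (n - 1)); auto.
        unfold Rdiv. rewrite Rmult_assoc, Rinv_l by lra. rewrite Rmult_1_r.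
        assert (eps * eps <= 1) by nra. nra. }
      assert (T2 : M * (Rr - x) / (eps * x ^ (n - 1)) <= M * Rr / (eps * r0 ^ (n - 1))).
      { unfold Rdiv. apply Rmult_le_compat; [apply Rmult_le_pos; lra|left; apply Rinv_0_lt_compat; nra| apply Rmult_le_compat_l; lra|].
        apply Rinv_le_contravar; nra. }
      assert (Rr ^ (n - 1) / (eps * r0 ^ (n - 1)) + M * Rr / (eps * r0 ^ (n - 1)) <= (Rr ^ (n - 1) + M * Rr + 1) / (eps * r0 ^ (n - 1))).
      { unfold Rdiv. assert (0 < / (eps * r0 ^ (n - 1))) by (apply Rinv_0_lt_compat; lra). nra. }
      lra.
    +
      intros r0 Hr0 x Hx.
      rewrite (is_derive_unique _ _ _ (d_v n Rr eps f ue x So ltac:(lra))).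
      pose proof (V1_abs n Rr eps f ue So Mo Hn HR He Hf Pb HPbe x ltac:(lra)) as HV. rewrite HQRe in HV.
      pose proof (pow_conv n Rr r0 x ltac:(lra) ltac:(lra)) as Hc.
      assert (Hxn : 0 < x ^ (n - 1)) by (apply pow_lt; lra).
      assert (Hr0n : 0 < r0 ^ ((n - 1) * (n - 1))) by (apply pow_lt; lra).
      eapply Rle_trans; [exact HV|].
      replace ((Pb ^ n + M) / (eps * x ^ (n - 1))) with ((Pb ^ n + M) / eps * / x ^ (n - 1)) by (field; lra).
      replace ((Pb ^ n + M + 1) * (1 + Rr) ^ ((n - 1) * (n - 2)) / (eps * r0 ^ ((n - 1) * (n - 1))))
        with ((Pb ^ n + M + 1) / eps * ((1 + Rr) ^ ((n - 1) * (n - 2)) / r0 ^ ((n - 1) * (n - 1)))) by (field; lra).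
      assert (0 < / x ^ (n - 1)) by (apply Rinv_0_lt_compat; lra).
      apply Rmult_le_compat; [apply Rdiv_le_0_compat; lra|lra| |auto].
      unfold Rdiv. apply Rmult_le_compat_r; [left; apply Rinv_0_lt_compat; lra|lra].
    +
      set (h6 := fun x => x ^ (2 * (n - 1)) * Rabs (v_of n ue x) ^ 2).
      set (B6 := Rr ^ (n - 1) * (eps * (Rr ^ (n - 1) * Pb)) + Rr ^ (n - 1) * M * Pb / eps * Rr).
      assert (HB6 : forall a, 0 < a < Rr -> RInt h6 a Rr <= B6).
      { intros a Ha. pose proof (vi_bound n Rr eps f ue Pb So Mo Hn HR He Hf HPbe a Ha) as H. rewrite HQRe in H. exact H. }
      destruct (improper h6 Rr B6 HR) as [I [HI [HIup HIapp]]]; auto.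
      * intros x Hx. unfold h6. apply cpt_mult; [apply cpt_pow, cpt_id|apply cpt_pow, cpt_abs, (c_v n Rr eps f ue x So); lra].
      * intros x Hx. unfold h6. apply Rmult_le_pos; [apply pow_le; lra|apply pow_le, Rabs_pos].
      * assert (HIB : I <= B6) by (apply (improper_le h6 Rr B6 I); auto).
        exists I, I. split; [|split; [exact HI|]].
        -- apply (gen_ext h6); auto. intros x Hx. unfold h6.
           rewrite (is_derive_unique _ _ _ (d_w n Rr eps f ue x So Hn ltac:(lra))).
           rewrite W1_eq by (auto; lra). rewrite !pow2_abs. rewrite Rpow_mult_distr.
           rewrite <- pow_mult. f_equal. f_equal. lia.
        -- assert (2 * B6 <= (2 * (Rr ^ (n - 1) * (Rr ^ (n - 1) * Pb) + Rr ^ (n - 1) * M * Pb * Rr) + 1) / eps).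
           { unfold B6.
             assert (0 <= Rr ^ (n - 1) * (Rr ^ (n - 1) * Pb)) by (apply Rmult_le_pos; [lra|nra]).
             assert (Rr ^ (n - 1) * (eps * (Rr ^ (n - 1) * Pb)) <= Rr ^ (n - 1) * (Rr ^ (n - 1) * Pb) / eps).
             { replace (Rr ^ (n - 1) * (eps * (Rr ^ (n - 1) * Pb))) with (eps * (Rr ^ (n - 1) * (Rr ^ (n - 1) * Pb))) by ring.
               unfold Rdiv. nra. }
             replace (Rr ^ (n - 1) * M * Pb / eps * Rr) with (Rr ^ (n - 1) * M * Pb * Rr / eps) by (field; lra).
             unfold Rdiv in *. assert (0 < / eps) by (apply Rinv_0_lt_compat; lra). nra. }
           lra.
    +
      intros Hn3.
      assert (Ha1 : 1 < INR n - 1) by (assert (H3 : INR 3 <= INR n) by (apply le_INR; lia); simpl in H3; lra).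
      set (B8 := eps * Pb ^ n + (INR n - 1) * (INR n * B7 n Rr eps S1 BF 1) + BF * Rpower Rr (INR n - 2) / eps * Y1).
      assert (HB8 : forall a, 0 < a < Rr -> eps * RInt (h8a n ue) a Rr + RInt (h8b n ue) a Rr <= B8).
      { intros a Ha. pose proof (viii_bound n Rr eps f ue u1 S1 BF Pb So Mo Hn3 HR He Hf Rd HQee HPbe a Ha) as H.
        fold Y1 in H. exact H. }
      assert (Hc8a : forall x, 0 < x <= Rr -> continuity_pt (h8a n ue) x).
      { intros x Hx. unfold h8a. apply cpt_mult; [apply cpt_pow, cpt_id|apply cpt_pow, cpt_abs, (c_V1 n Rr eps f ue x So); lra]. }
      assert (Hc8b : forall x, 0 < x <= Rr -> continuity_pt (h8b n ue) x).
      { intros x Hx. unfold h8b. apply cpt_mult; [apply cpt_pow, (c_p n Rr eps f ue x So); lra|apply cpt_pow, cpt_abs, (c_v n Rr eps f ue x So); lra]. }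
      assert (Hp8a : forall x, 0 < x <= Rr -> 0 <= h8a n ue x).
      { intros x Hx. unfold h8a. apply Rmult_le_pos; [apply pow_le; lra|apply pow_le, Rabs_pos]. }
      assert (Hp8b : forall x, 0 < x <= Rr -> 0 <= h8b n ue x).
      { intros x Hx. unfold h8b. apply Rmult_le_pos; [apply pow_le, Hpe; lra|apply pow_le, Rabs_pos]. }
      assert (HN8a : forall a, 0 < a < Rr -> 0 <= RInt (h8a n ue) a Rr).
      { intros a Ha. apply RInt_nonneg; [lra|intros; apply Hc8a; lra|intros; apply Hp8a; lra]. }
      assert (HN8b : forall a, 0 < a < Rr -> 0 <= RInt (h8b n ue) a Rr).
      { intros a Ha. apply RInt_nonneg; [lra|intros; apply Hc8b; lra|intros; apply Hp8b; lra]. }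
      destruct (improper (h8a n ue) Rr (B8 / eps) HR Hc8a Hp8a) as [I1 [HI1 [_ HI1a]]].
      { intros a Ha. specialize (HB8 a Ha). specialize (HN8b a Ha).
        apply Rmult_le_reg_l with eps; auto. replace (eps * (B8 / eps)) with B8 by (field; lra). lra. }
      destruct (improper (h8b n ue) Rr B8 HR Hc8b Hp8b) as [I2 [HI2 [_ HI2a]]].
      { intros a Ha. specialize (HB8 a Ha). specialize (HN8a a Ha). nra. }
      exists I1, I2. split; [|split; [exact HI2|]].
      * apply (gen_ext (h8a n ue)); auto. intros x Hx. unfold h8a.
        rewrite (is_derive_unique _ _ _ (d_v n Rr eps f ue x So ltac:(lra))). reflexivity.
      * apply Rle_trans with B8.
        -- apply (lim_comb (fun a => RInt (h8a n ue) a Rr) (fun a => RInt (h8b n ue) a Rr) I1 I2 eps B8 Rr); auto; lra.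
        -- unfold B8.
           pose proof (B7_le n Rr eps S1 BF 1 Heps HS1 HBF Ha1) as HB7.
           assert (B7 n Rr eps S1 BF 1 <= Rabs (B7c n Rr S1 BF 1) / eps).
           { eapply Rle_trans; [exact HB7|]. unfold Rdiv. apply Rmult_le_compat_r; [left; apply Rinv_0_lt_compat; lra|apply Rle_abs]. }
           assert (Hie : 0 < / eps) by (apply Rinv_0_lt_compat; lra).
           assert (eps * Pb ^ n <= Pb ^ n / eps) by (unfold Rdiv; nra).
           assert ((INR n - 1) * (INR n * B7 n Rr eps S1 BF 1) <= (INR n - 1) * (INR n * Rabs (B7c n Rr S1 BF 1)) / eps).
           { unfold Rdiv. rewrite Rmult_assoc, Rmult_assoc. apply Rmult_le_compat_l; [lra|].
             apply Rmult_le_compat_l; [lra|]. exact H. }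
           replace (BF * Rpower Rr (INR n - 2) / eps * Y1) with (BF * Rpower Rr (INR n - 2) * Y1 / eps) by (field; lra).
           unfold Rdiv in *. nra.
  - intros alpha Ha.
    set (beta := INR n - 1 - alpha).
    assert (Hb : 0 < beta) by (unfold beta; lra).
    pose proof (B7c_nonneg n Rr S1 BF alpha HS1 HBF Ha) as HB7c.
    assert (Hcoef : 0 < INR n + 4 / beta) by (assert (0 < 4 / beta) by (apply Rdiv_lt_0_compat; lra); lra).
    exists ((INR n + 4 / beta) * B7c n Rr S1 BF alpha + 1). split; [nra|].
    intros eps Heps. assert (He : 0 < eps) by lra.
    pose proof (Sol eps He) as So. pose proof (Mono eps He) as Mo.
    pose proof (HQe eps He) as HQee.
    set (ue := u eps) in *.
    set (B := B7 n Rr eps S1 BF alpha).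
    assert (HB : forall a, 0 < a < Rr -> / INR n * RInt (h7b n ue alpha) a Rr + (eps * beta / 4) * RInt (h7a n ue alpha) a Rr <= B).
    { intros a Haa. exact (vii_bound n Rr eps f ue u1 S1 BF alpha So Mo Hn HR He Hf Rd HQee Ha a Haa). }
    assert (Hca : forall x, 0 < x <= Rr -> continuity_pt (h7a n ue alpha) x) by (intros; apply (c_h7a n Rr eps f ue alpha x So); auto).
    assert (Hcb : forall x, 0 < x <= Rr -> continuity_pt (h7b n ue alpha) x) by (intros; apply (c_h7b n Rr eps f ue alpha x So); auto).
    assert (Hpa : forall x, 0 < x <= Rr -> 0 <= h7a n ue alpha x) by (intros; apply h7a_nonneg).
    assert (Hpb : forall x, 0 < x <= Rr -> 0 <= h7b n ue alpha x) by (intros; apply (h7b_nonneg n Rr eps f ue alpha x So Mo Hn HR He Hf); auto).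
    assert (HNa : forall a, 0 < a < Rr -> 0 <= RInt (h7a n ue alpha) a Rr).
    { intros a Haa. apply RInt_nonneg; [lra|intros; apply Hca; lra|intros; apply Hpa; lra]. }
    assert (HNb : forall a, 0 < a < Rr -> 0 <= RInt (h7b n ue alpha) a Rr).
    { intros a Haa. apply RInt_nonneg; [lra|intros; apply Hcb; lra|intros; apply Hpb; lra]. }
    assert (Hebp : 0 < eps * beta / 4) by (apply Rdiv_lt_0_compat; [nra|lra]).
    assert (HFa : forall a, 0 < a < Rr -> eps * RInt (h7a n ue alpha) a Rr <= 4 / beta * B).
    { intros a Haa. specialize (HB a Haa). specialize (HNb a Haa). specialize (HNa a Haa).
      assert (Hin : 0 <= / INR n * RInt (h7b n ue alpha) a Rr) by (apply Rmult_le_pos; [left; apply Rinv_0_lt_compat|]; lra).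
      assert (eps * beta / 4 * RInt (h7a n ue alpha) a Rr <= B) by lra.
      replace (eps * RInt (h7a n ue alpha) a Rr) with (4 / beta * (eps * beta / 4 * RInt (h7a n ue alpha) a Rr)) by (field; lra).
      apply Rmult_le_compat_l; [left; apply Rdiv_lt_0_compat; lra|auto]. }
    assert (HFb : forall a, 0 < a < Rr -> RInt (h7b n ue alpha) a Rr <= INR n * B).
    { intros a Haa. specialize (HB a Haa). specialize (HNa a Haa).
      assert (0 <= eps * beta / 4 * RInt (h7a n ue alpha) a Rr) by (apply Rmult_le_pos; lra).
      assert (/ INR n * RInt (h7b n ue alpha) a Rr <= B) by lra.
      replace (RInt (h7b n ue alpha) a Rr) with (INR n * (/ INR n * RInt (h7b n ue alpha) a Rr)) by (field; lra).
      apply Rmult_le_compat_l; lra. }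
    destruct (improper (h7a n ue alpha) Rr (4 / beta * B / eps) HR Hca Hpa) as [I1 [HI1 [_ HI1a]]].
    { intros a Haa. specialize (HFa a Haa). apply Rmult_le_reg_l with eps; auto.
      replace (eps * (4 / beta * B / eps)) with (4 / beta * B) by (field; lra). lra. }
    destruct (improper (h7b n ue alpha) Rr (INR n * B) HR Hcb Hpb) as [I2 [HI2 [_ HI2a]]]; auto.
    exists I1, I2. split; [exact HI1|split; [exact HI2|]].
    apply Rle_trans with ((INR n + 4 / beta) * B).
    + apply (lim_comb (fun a => RInt (h7a n ue alpha) a Rr) (fun a => RInt (h7b n ue alpha) a Rr) I1 I2 eps _ Rr); auto; [lra|].
      intros a Haa. specialize (HFa a Haa). specialize (HFb a Haa). lra.
    + pose proof (B7_le n Rr eps S1 BF alpha Heps HS1 HBF Ha) as HB7. fold B in HB7.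
      assert ((INR n + 4 / beta) * B <= (INR n + 4 / beta) * (B7c n Rr S1 BF alpha / eps)) by (apply Rmult_le_compat_l; lra).
      assert (0 < / eps) by (apply Rinv_0_lt_compat; lra).
      unfold Rdiv in *. nra.
  - intros Hn2 alpha Ha. subst n.
    assert (Ha' : alpha < INR 2 - 1) by (simpl; lra).
    pose proof (B7c_nonneg 2 Rr S1 BF alpha HS1 HBF Ha') as HB7c.
    assert (HX : 0 < Rpower Rr (1 - alpha)) by apply Rpower_pos.
    assert (HBX : 0 <= BF * Rpower Rr (1 - alpha) * Y1) by (apply Rmult_le_pos; [apply Rmult_le_pos|]; lra).
    assert (HP2 : 0 < Pb ^ 2) by (apply pow_lt; lra).
    exists (Rpower Rr (1 - alpha) * Pb ^ 2 + INR 2 * B7c 2 Rr S1 BF alpha + BF * Rpower Rr (1 - alpha) * Y1 + 1).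
    split. { assert (0 <= INR 2 * B7c 2 Rr S1 BF alpha) by (apply Rmult_le_pos; [apply pos_INR|auto]). nra. }
    intros eps Heps. assert (He : 0 < eps) by lra.
    pose proof (Sol eps He) as So. pose proof (Mono eps He) as Mo.
    pose proof (HQe eps He) as HQee. pose proof (HPb eps Heps) as HPbe.
    set (ue := u eps) in *.
    set (B := eps * Rpower Rr (1 - alpha) * Pb ^ 2 + INR 2 * B7 2 Rr eps S1 BF alpha + BF * Rpower Rr (1 - alpha) / eps * Y1).
    assert (HB : forall a, 0 < a < Rr -> eps * RInt (h9a ue alpha) a Rr + RInt (h9b ue alpha) a Rr <= B).
    { intros a Haa. pose proof (ix_bound Rr eps f ue u1 S1 BF Pb alpha So Mo HR He Hf Rd HQee HPbe Ha a Haa) as H.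
      fold Y1 in H. exact H. }
    assert (Hca : forall x, 0 < x <= Rr -> continuity_pt (h9a ue alpha) x).
    { intros x Hx. unfold h9a. apply cpt_mult; [apply cpt_Rpower; [apply cpt_id|lra]|apply cpt_pow, cpt_abs, (c_V1 2 Rr eps f ue x So); lra]. }
    assert (Hcb : forall x, 0 < x <= Rr -> continuity_pt (h9b ue alpha) x).
    { intros x Hx. unfold h9b. apply cpt_mult; [apply cpt_mult; [apply cpt_Rpower; [apply cpt_id|lra]|apply (c_p 2 Rr eps f ue x So); lra]|apply cpt_pow, cpt_abs, (c_v 2 Rr eps f ue x So); lra]. }
    assert (Hpa : forall x, 0 < x <= Rr -> 0 <= h9a ue alpha x).
    { intros x Hx. unfold h9a. apply Rmult_le_pos; [left; apply Rpower_pos|apply pow_le, Rabs_pos]. }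
    assert (Hpb : forall x, 0 < x <= Rr -> 0 <= h9b ue alpha x).
    { intros x Hx. unfold h9b. apply Rmult_le_pos; [apply Rmult_le_pos; [left; apply Rpower_pos|apply (p_nonneg 2 Rr eps f ue So Mo); lra]|apply pow_le, Rabs_pos]. }
    assert (HNa : forall a, 0 < a < Rr -> 0 <= RInt (h9a ue alpha) a Rr).
    { intros a Haa. apply RInt_nonneg; [lra|intros; apply Hca; lra|intros; apply Hpa; lra]. }
    assert (HNb : forall a, 0 < a < Rr -> 0 <= RInt (h9b ue alpha) a Rr).
    { intros a Haa. apply RInt_nonneg; [lra|intros; apply Hcb; lra|intros; apply Hpb; lra]. }
    destruct (improper (h9a ue alpha) Rr (B / eps) HR Hca Hpa) as [I1 [HI1 [_ HI1a]]].
    { intros a Haa. specialize (HB a Haa). specialize (HNb a Haa).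
      apply Rmult_le_reg_l with eps; auto. replace (eps * (B / eps)) with B by (field; lra). lra. }
    destruct (improper (h9b ue alpha) Rr B HR Hcb Hpb) as [I2 [HI2 [_ HI2a]]].
    { intros a Haa. specialize (HB a Haa). specialize (HNa a Haa). nra. }
    exists I1, I2. split; [|split; [exact HI2|]].
    + apply (gen_ext (h9a ue alpha)); auto. intros x Hx. unfold h9a.
      rewrite (is_derive_unique _ _ _ (d_v 2 Rr eps f ue x So ltac:(lra))). reflexivity.
    + apply Rle_trans with B.
      * apply (lim_comb (fun a => RInt (h9a ue alpha) a Rr) (fun a => RInt (h9b ue alpha) a Rr) I1 I2 eps B Rr); auto; lra.
      * unfold B.
        pose proof (B7_le 2 Rr eps S1 BF alpha Heps HS1 HBF Ha') as HB7.
        assert (Hie : 0 < / eps) by (apply Rinv_0_lt_compat; lra).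
        assert (eps * Rpower Rr (1 - alpha) * Pb ^ 2 <= Rpower Rr (1 - alpha) * Pb ^ 2 / eps).
        { unfold Rdiv. assert (0 < Rpower Rr (1 - alpha) * Pb ^ 2) by (apply Rmult_lt_0_compat; lra).
          assert (eps <= / eps) by (apply Rmult_le_reg_l with eps; auto; rewrite Rinv_r by lra; nra).
          replace (eps * Rpower Rr (1 - alpha) * Pb ^ 2) with (eps * (Rpower Rr (1 - alpha) * Pb ^ 2)) by ring. nra. }
        assert (INR 2 * B7 2 Rr eps S1 BF alpha <= INR 2 * B7c 2 Rr S1 BF alpha / eps).
        { unfold Rdiv. rewrite Rmult_assoc. apply Rmult_le_compat_l; [apply pos_INR|exact HB7]. }
        replace (BF * Rpower Rr (1 - alpha) / eps * Y1) with (BF * Rpower Rr (1 - alpha) * Y1 / eps) by (field; lra).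
        unfold Rdiv in *. nra.
Qed.
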